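(* Let $x_1,\dots,x_{n-1}>0$, $\gamma,\delta>0$, $\gamma\neq1\neq\delta$, set $x_0=1$, and for a matrix below let $\lambda=\lambda_{\max}$ denote its Perron eigenvalue and $\mathbf{w}^{EM}=(w_1,\dots,w_n)^T$ its principal right eigenvector. Then: Case 1 ($n\ge4$; matrix $\mathbf{P}$ with entries $x_{j-1}/x_{i-1}$ except $p_{12}=\delta x_1$, $p_{21}=1/(\delta x_1)$, $p_{13}=\gamma x_2$, $p_{31}=1/(\gamma x_2)$). $\mathbf{w}^{EM}$ can be taken as: $w_1=\delta\gamma\lambda(\lambda-n+1)$, $w_2=\frac1{x_1}[\gamma\lambda-(n-2)\gamma+\delta+(n-3)\delta\gamma]$, $w_3=\frac1{x_2}[\delta\lambda-(n-2)\delta+\gamma+(n-3)\delta\gamma]$, $w_i=\frac1{x_{i-1}}[\gamma+\delta+\delta\gamma\lambda-2\delta\gamma]$ ($i\ge4$). Moreover there are real constants $c_{11},c_{12},c_{13}$ such that $\mathbf{w}^{EM}=c_{11}\mathbf{u}=c_{12}\mathbf{v}=c_{13}\mathbf{z}$, where $u_1=x_1\gamma\lambda[\delta\lambda-(n-2)\delta+\gamma+n-3]$, $u_2=\gamma\lambda^3-(n-1)\gamma\lambda^2-(n-3)(\gamma^2-2\gamma+1)$, $u_3=\frac{x_1}{x_2}[\gamma\lambda^2-\gamma\lambda+\delta\lambda+(n-3)(\delta\gamma-\delta-\gamma+1)]$, $u_i=\frac{x_1}{x_{i-1}}[\gamma\lambda^2-\gamma\lambda-\gamma+\delta+\delta\gamma\lambda-\delta\gamma+\gamma^2]$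 ($i\ge4$); $v_1=x_2\delta\lambda[\delta+\gamma\lambda-(n-2)\gamma+n-3]$, $v_2=\frac{x_2}{x_1}[\delta\lambda^2-\delta\lambda+\gamma\lambda+(n-3)(\delta\gamma-\delta-\gamma+1)]$, $v_3=\delta\lambda^3-(n-1)\delta\lambda^2-(n-3)(\delta^2-2\delta+1)$, $v_i=\frac{x_2}{x_{i-1}}[\delta\lambda^2-\delta\lambda+\gamma-\delta+\delta^2+\delta\gamma\lambda-\delta\gamma]$ ($i\ge4$); $z_1=x_3\delta\gamma\lambda(\delta+\gamma+\lambda-2)$, $z_2=\frac{x_3}{x_1}[\delta\gamma\lambda^2-\delta\gamma\lambda+\gamma^2+\gamma\lambda-\gamma-\delta\gamma+\delta]$, $z_3=\frac{x_3}{x_2}[\delta\gamma\lambda^2-\delta\gamma\lambda-\delta\gamma+\gamma+\delta^2+\delta\lambda-\delta]$, $z_i=\frac{x_3}{x_{i-1}}[\delta\gamma\lambda^2-4\delta\gamma+\gamma+\delta+\delta^2\gamma+\gamma^2\delta]$ ($i\ge4$). Case 2A ($n=4$; matrix $\mathbf{Q}$ with entries $x_{j-1}/x_{i-1}$ except $q_{12}=\delta x_1$, $q_{21}=1/(\delta x_1)$, $q_{34}=\gamma x_3/x_2$, $q_{43}=x_2/(\gamma x_3)$). $\mathbf{w}^{EM}$ can be taken as: $w_1=\delta(\lambda^3\gamma-3\lambda^2\gamma-1+2\gamma-\gamma^2)$, $w_2=\frac1{x_1}[\lambda^2\gamma-2\lambda\gamma+\delta+2\lambda\delta\gamma-2\delta\gamma+\delta\gamma^2]$,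 $w_3=\frac{\gamma}{x_2}[\gamma+\lambda-1+\delta\lambda^2-2\lambda\delta+\delta+\lambda\delta\gamma-\delta\gamma]$, $w_4=\frac1{x_3}[1+\lambda\gamma-\gamma+\lambda\delta-\delta+\delta\gamma\lambda^2-2\lambda\delta\gamma+\delta\gamma]$. Moreover there are real $c_{21},c_{22},c_{23}$ with $\mathbf{w}^{EM}=c_{21}\mathbf{u}=c_{22}\mathbf{v}=c_{23}\mathbf{z}$, where $u_1=x_1[\delta\gamma\lambda^2-2\lambda\delta\gamma+1+2\lambda\gamma-2\gamma+\gamma^2]$, $u_2=\lambda^3\gamma-3\lambda^2\gamma-1+2\gamma-\gamma^2$, $u_3=\frac{x_1}{x_2}\gamma[\lambda\gamma+\lambda^2-2\lambda-\gamma+1+\lambda\delta-\delta+\delta\gamma]$, $u_4=\frac{x_1}{x_3}[\lambda+\lambda^2\gamma-2\lambda\gamma-1+\gamma+\delta+\lambda\delta\gamma-\delta\gamma]$; $v_1=x_2\delta(1+\lambda\gamma-\gamma)(\delta+\lambda-1)$, $v_2=\frac{x_2}{x_1}[1+\lambda\gamma-\gamma+\lambda\delta-\delta+\delta\gamma\lambda^2-2\lambda\delta\gamma+\delta\gamma]$, $v_3=\gamma(\delta\lambda^3-3\delta\lambda^2-1+2\delta-\delta^2)$, $v_4=\frac{x_2}{x_3}[2\lambda\delta\gamma+\delta\lambda^2-2\lambda\delta-2\delta\gamma+\gamma+\delta^2\gamma]$; $z_1=x_3\delta(\lambda\gamma+\lambda^2-2\lambda-\gamma+1+\lambda\delta-\delta+\delta\gamma)$,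 $z_2=\frac{x_3}{x_1}[\gamma+\lambda-1+\delta\lambda^2-2\lambda\delta+\delta+\lambda\delta\gamma-\delta\gamma]$, $z_3=\frac{x_3}{x_2}[2\lambda\delta+\delta\gamma\lambda^2-2\lambda\delta\gamma-2\delta+1+\delta^2]$, $z_4=\delta\lambda^3-3\delta\lambda^2-1+2\delta-\delta^2$. Case 2B ($n\ge5$; matrix $\mathbf{R}$ with entries $x_{j-1}/x_{i-1}$ except $r_{12}=\delta x_1$, $r_{21}=1/(\delta x_1)$, $r_{34}=\gamma x_3/x_2$, $r_{43}=x_2/(\gamma x_3)$). $\mathbf{w}^{EM}$ can be taken as: $w_1=\delta\lambda[\lambda^3\gamma-(n-1)\lambda^2\gamma-(n-3)(\gamma^2-2\gamma+1)]$, $w_2=\frac1{x_1}\{\lambda^3\gamma-(n-2)\lambda^2\gamma+(n-2)\delta\gamma\lambda^2+[\lambda\delta+(n-4)(\delta-1)](\gamma^2-2\gamma+1)\}$, $w_3=\frac{\gamma\lambda}{x_2}[\gamma+\lambda-1+\delta\lambda^2-2\lambda\delta+\delta+\lambda\delta\gamma-\delta\gamma]$, $w_4=\frac{\lambda}{x_3}[1+\lambda\gamma-\gamma+\lambda\delta-\delta+\delta\gamma\lambda^2-2\lambda\delta\gamma+\delta\gamma]$, $w_i=\frac1{x_{i-1}}[\gamma^2-2\gamma+\lambda^2\gamma+1+\lambda\delta-\delta\gamma\lambda^2-2\lambda\delta\gamma+\lambda\gamma^2\delta+\lambda^3\delta\gamma-\delta+2\delta\gamma-\delta\gamma^2]$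 ($i\ge5$). Moreover there are real $c_{31},c_{32},c_{33},c_{34}$ with $\mathbf{w}^{EM}=c_{31}\mathbf{u}=c_{32}\mathbf{v}=c_{33}\mathbf{z}=c_{34}\mathbf{y}$, where $u_1=x_1[\lambda^3\delta\gamma-(n-2)\delta\gamma\lambda^2-(n-4)\delta(\gamma-1)^2+\lambda+(n-2)\lambda^2\gamma-2\lambda\gamma+\lambda\gamma^2+(n-4)(\gamma-1)^2]$, $u_2=\lambda(\lambda^3\gamma-(n-1)\lambda^2\gamma-(n-3)(\gamma-1)^2)$, $u_3=\frac{x_1}{x_2}\gamma\lambda(\lambda\gamma+\lambda^2-2\lambda-\gamma+1+\delta\lambda-\delta+\delta\gamma)$, $u_4=\frac{x_1}{x_3}\lambda(\lambda+\lambda^2\gamma-2\lambda\gamma-1+\gamma+\delta+\lambda\delta\gamma-\delta\gamma)$, $u_i=\frac{x_1}{x_{i-1}}(\lambda\gamma^2-2\lambda\gamma+\lambda^3\gamma+\lambda-\gamma^2+2\gamma-\lambda^2\gamma-1+\delta-2\delta\gamma+\delta\gamma^2+\delta\gamma\lambda^2)$ ($i\ge5$); $v_1=x_2\delta\lambda(1+\lambda\gamma-\gamma)(\delta+\lambda-1)$, $v_2=\frac{x_2}{x_1}\lambda(1+\lambda\gamma-\gamma)(1+\delta\lambda-\delta)$, $v_3=\gamma\lambda[\lambda^3\delta-(n-1)\delta\lambda^2-(n-3)(\delta-1)^2]$, $v_4=\frac{x_2}{x_3}[\delta\lambda^3-(n-2)\delta\lambda^2(1-\gamma)-2\lambda\delta\gamma+2(n-4)\delta(1-\gamma)+\lambda\gamma+\delta^2\lambda\gamma+(n-4)(-1+\gamma-\delta^2+\delta^2\gamma)]$,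 $v_i=\frac{x_2}{x_{i-1}}(1+\lambda\gamma-\gamma)(\delta\lambda^2+1-2\delta+\delta^2)$ ($i\ge5$); $z_1=x_3\delta\lambda(\lambda\gamma+\lambda^2-2\lambda-\gamma+1+\delta\lambda-\delta+\delta\gamma)$, $z_2=\frac{x_3}{x_1}\lambda(\gamma+\lambda-1)(1+\delta\lambda-\delta)$, $z_3=\frac{x_3}{x_2}[\lambda^3\delta\gamma-(n-2)\delta\lambda^2(\gamma-1)-2\delta\lambda+2(n-4)\delta(\gamma-1)+\lambda+\delta^2\lambda+(n-4)(1-\gamma+\delta^2-\delta^2\gamma)]$, $z_4=\lambda[\delta\lambda^3-(n-1)\delta\lambda^2-(n-3)(\delta-1)^2]$, $z_i=\frac{x_3}{x_{i-1}}(\delta\gamma\lambda^2+\lambda^3\delta-\delta\lambda^2-2\delta\lambda-2\delta\gamma+2\delta-1+\gamma+\lambda+\delta^2\lambda-\delta^2+\delta^2\gamma)$ ($i\ge5$); $y_1=x_4\delta\lambda(\gamma^2-2\gamma+\lambda^2\gamma+1)(\delta+\lambda-1)$, $y_2=\frac{x_4}{x_1}\lambda(\gamma^2-2\gamma+\lambda^2\gamma+1)(1+\delta\lambda-\delta)$, $y_3=\frac{x_4}{x_2}\gamma\lambda(\delta\gamma\lambda^2+\lambda^3\delta-\delta\lambda^2-2\delta\lambda-2\delta\gamma+2\delta-1+\gamma+\lambda+\delta^2\lambda-\delta^2+\delta^2\gamma)$, $y_4=\frac{x_4}{x_3}\lambda(\delta\lambda^2+\lambda^3\delta\gamma-\delta\gamma\lambda^2-2\lambda\delta\gamma-2\delta+2\delta\gamma-\gamma+1+\lambda\gamma+\delta^2+\delta^2\lambda\gamma-\delta^2\gamma)$,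 $y_i=\frac{x_4}{x_{i-1}}(\gamma^2-2\gamma+\lambda^2\gamma+1)(\delta\lambda^2+1-2\delta+\delta^2)$ ($i\ge5$).
   Context: The principal right eigenvector of a positive matrix is its Perron eigenvector (positive eigenvector for the largest eigenvalue $\lambda_{\max}$), determined up to a positive scalar multiple. *)

(* Defs.v *)
From HB Require Import structures.
From mathcomp Require Import all_boot all_order all_algebra.
From mathcomp Require Import reals.
Set Implicit Arguments. Unset Strict Implicit. Unset Printing Implicit Defensive.
Import Order.TTheory GRing.Theory Num.Theory.
Local Open Scope ring_scope.

Section Defs.
Variable R : realType.

Definition is_lambda_max (n : nat) (A : 'M[R]_n) (l : R) : Prop :=
  eigenvalue A l /\ (forall m : R, eigenvalue A m -> m <= l).

Definition is_principal_right_eigvec (n : nat) (A : 'M[R]_n) (w : 'cV[R]_n)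
  : Prop :=
  exists l : R, [/\ is_lambda_max A l, A *m w = l *: w &
                    forall i : 'I_n, 0 < w i ord0].

(* A column vector given by a function of the 0-based index k
   (k = paper index i minus 1). *)
Definition mkcol (n : nat) (f : nat -> R) : 'cV[R]_n := \col_(i < n) f (i : nat).

(* Base entries x_{j-1}/x_{i-1} (paper) = x j / x i (0-based), x 0 = 1. *)

Definition Pmat (n : nat) (x : nat -> R) (d g : R) : 'M[R]_n :=
  \matrix_(i < n, j < n)
    if ((i : nat) == 0%N) && ((j : nat) == 1%N) then d * x 1%N
    else if ((i : nat) == 1%N) && ((j : nat) == 0%N) then (d * x 1%N)^-1
    else if ((i : nat) == 0%N) && ((j : nat) == 2%N) then g * x 2%N
    else if ((i : nat) == 2%N) && ((j : nat) == 0%N) then (g * x 2%N)^-1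
    else x j / x i.

(* Q (n = 4) and R (n >= 5) have the same defining pattern. *)
Definition QRmat (n : nat) (x : nat -> R) (d g : R) : 'M[R]_n :=
  \matrix_(i < n, j < n)
    if ((i : nat) == 0%N) && ((j : nat) == 1%N) then d * x 1%N
    else if ((i : nat) == 1%N) && ((j : nat) == 0%N) then (d * x 1%N)^-1
    else if ((i : nat) == 2%N) && ((j : nat) == 3%N) then g * x 3%N / x 2%N
    else if ((i : nat) == 3%N) && ((j : nat) == 2%N) then x 2%N / (g * x 3%N)
    else x j / x i.

(* ---------- Case 1 vectors (d = delta, g = gamma, l = lambda) ---------- *)
Section Case1.
Variables (n : nat) (x : nat -> R) (d g l : R).
Let N : R := n%:R.

Definition w1 : 'cV[R]_n := mkcol n (fun k =>
  if k == 0%N then d * g * l * (l - N + 1)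
  else if k == 1%N then (x 1%N)^-1 * (g * l - (N - 2) * g + d + (N - 3) * d * g)
  else if k == 2%N then (x 2%N)^-1 * (d * l - (N - 2) * d + g + (N - 3) * d * g)
  else (x k)^-1 * (g + d + d * g * l - 2 * d * g)).

Definition u1 : 'cV[R]_n := mkcol n (fun k =>
  if k == 0%N then x 1%N * g * l * (d * l - (N - 2) * d + g + N - 3)
  else if k == 1%N then g * l ^+ 3 - (N - 1) * g * l ^+ 2 - (N - 3) * (g ^+ 2 - 2 * g + 1)
  else if k == 2%N then x 1%N / x 2%N *
      (g * l ^+ 2 - g * l + d * l + (N - 3) * (d * g - d - g + 1))
  else x 1%N / x k *
      (g * l ^+ 2 - g * l - g + d + d * g * l - d * g + g ^+ 2)).

Definition v1 : 'cV[R]_n := mkcol n (fun k =>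
  if k == 0%N then x 2%N * d * l * (d + g * l - (N - 2) * g + N - 3)
  else if k == 1%N then x 2%N / x 1%N *
      (d * l ^+ 2 - d * l + g * l + (N - 3) * (d * g - d - g + 1))
  else if k == 2%N then d * l ^+ 3 - (N - 1) * d * l ^+ 2 - (N - 3) * (d ^+ 2 - 2 * d + 1)
  else x 2%N / x k *
      (d * l ^+ 2 - d * l + g - d + d ^+ 2 + d * g * l - d * g)).

Definition z1 : 'cV[R]_n := mkcol n (fun k =>
  if k == 0%N then x 3%N * d * g * l * (d + g + l - 2)
  else if k == 1%N then x 3%N / x 1%N *
      (d * g * l ^+ 2 - d * g * l + g ^+ 2 + g * l - g - d * g + d)
  else if k == 2%N then x 3%N / x 2%N *
      (d * g * l ^+ 2 - d * g * l - d * g + g + d ^+ 2 + d * l - d)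
  else x 3%N / x k *
      (d * g * l ^+ 2 - 4 * d * g + g + d + d ^+ 2 * g + g ^+ 2 * d)).
End Case1.

Section Case2A.
Variables (x : nat -> R) (d g l : R).

Definition w2A : 'cV[R]_4 := mkcol 4 (fun k =>
  if k == 0%N then d * (l ^+ 3 * g - 3 * l ^+ 2 * g - 1 + 2 * g - g ^+ 2)
  else if k == 1%N then (x 1%N)^-1 *
      (l ^+ 2 * g - 2 * l * g + d + 2 * l * d * g - 2 * d * g + d * g ^+ 2)
  else if k == 2%N then g / x 2%N *
      (g + l - 1 + d * l ^+ 2 - 2 * l * d + d + l * d * g - d * g)
  else (x 3%N)^-1 *
      (1 + l * g - g + l * d - d + d * g * l ^+ 2 - 2 * l * d * g + d * g)).

Definition u2A : 'cV[R]_4 := mkcol 4 (fun k =>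
  if k == 0%N then x 1%N *
      (d * g * l ^+ 2 - 2 * l * d * g + 1 + 2 * l * g - 2 * g + g ^+ 2)
  else if k == 1%N then l ^+ 3 * g - 3 * l ^+ 2 * g - 1 + 2 * g - g ^+ 2
  else if k == 2%N then x 1%N / x 2%N * g *
      (l * g + l ^+ 2 - 2 * l - g + 1 + l * d - d + d * g)
  else x 1%N / x 3%N *
      (l + l ^+ 2 * g - 2 * l * g - 1 + g + d + l * d * g - d * g)).

Definition v2A : 'cV[R]_4 := mkcol 4 (fun k =>
  if k == 0%N then x 2%N * d * (1 + l * g - g) * (d + l - 1)
  else if k == 1%N then x 2%N / x 1%N *
      (1 + l * g - g + l * d - d + d * g * l ^+ 2 - 2 * l * d * g + d * g)
  else if k == 2%N then g * (d * l ^+ 3 - 3 * d * l ^+ 2 - 1 + 2 * d - d ^+ 2)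
  else x 2%N / x 3%N *
      (2 * l * d * g + d * l ^+ 2 - 2 * l * d - 2 * d * g + g + d ^+ 2 * g)).

Definition z2A : 'cV[R]_4 := mkcol 4 (fun k =>
  if k == 0%N then x 3%N * d *
      (l * g + l ^+ 2 - 2 * l - g + 1 + l * d - d + d * g)
  else if k == 1%N then x 3%N / x 1%N *
      (g + l - 1 + d * l ^+ 2 - 2 * l * d + d + l * d * g - d * g)
  else if k == 2%N then x 3%N / x 2%N *
      (2 * l * d + d * g * l ^+ 2 - 2 * l * d * g - 2 * d + 1 + d ^+ 2)
  else d * l ^+ 3 - 3 * d * l ^+ 2 - 1 + 2 * d - d ^+ 2).
End Case2A.

Section Case2B.
Variables (n : nat) (x : nat -> R) (d g l : R).
Let N : R := n%:R.

Definition w2B : 'cV[R]_n := mkcol n (fun k =>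
  if k == 0%N then d * l *
      (l ^+ 3 * g - (N - 1) * l ^+ 2 * g - (N - 3) * (g ^+ 2 - 2 * g + 1))
  else if k == 1%N then (x 1%N)^-1 *
      (l ^+ 3 * g - (N - 2) * l ^+ 2 * g + (N - 2) * d * g * l ^+ 2
       + (l * d + (N - 4) * (d - 1)) * (g ^+ 2 - 2 * g + 1))
  else if k == 2%N then g * l / x 2%N *
      (g + l - 1 + d * l ^+ 2 - 2 * l * d + d + l * d * g - d * g)
  else if k == 3%N then l / x 3%N *
      (1 + l * g - g + l * d - d + d * g * l ^+ 2 - 2 * l * d * g + d * g)
  else (x k)^-1 *
      (g ^+ 2 - 2 * g + l ^+ 2 * g + 1 + l * d - d * g * l ^+ 2 - 2 * l * d * g
       + l * g ^+ 2 * d + l ^+ 3 * d * g - d + 2 * d * g - d * g ^+ 2)).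

Definition u2B : 'cV[R]_n := mkcol n (fun k =>
  if k == 0%N then x 1%N *
      (l ^+ 3 * d * g - (N - 2) * d * g * l ^+ 2 - (N - 4) * d * (g - 1) ^+ 2
       + l + (N - 2) * l ^+ 2 * g - 2 * l * g + l * g ^+ 2 + (N - 4) * (g - 1) ^+ 2)
  else if k == 1%N then l *
      (l ^+ 3 * g - (N - 1) * l ^+ 2 * g - (N - 3) * (g - 1) ^+ 2)
  else if k == 2%N then x 1%N / x 2%N * g * l *
      (l * g + l ^+ 2 - 2 * l - g + 1 + d * l - d + d * g)
  else if k == 3%N then x 1%N / x 3%N * l *
      (l + l ^+ 2 * g - 2 * l * g - 1 + g + d + l * d * g - d * g)
  else x 1%N / x k *
      (l * g ^+ 2 - 2 * l * g + l ^+ 3 * g + l - g ^+ 2 + 2 * g - l ^+ 2 * g - 1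
       + d - 2 * d * g + d * g ^+ 2 + d * g * l ^+ 2)).

Definition v2B : 'cV[R]_n := mkcol n (fun k =>
  if k == 0%N then x 2%N * d * l * (1 + l * g - g) * (d + l - 1)
  else if k == 1%N then x 2%N / x 1%N * l * (1 + l * g - g) * (1 + d * l - d)
  else if k == 2%N then g * l *
      (l ^+ 3 * d - (N - 1) * d * l ^+ 2 - (N - 3) * (d - 1) ^+ 2)
  else if k == 3%N then x 2%N / x 3%N *
      (d * l ^+ 3 - (N - 2) * d * l ^+ 2 * (1 - g) - 2 * l * d * g
       + 2 * (N - 4) * d * (1 - g) + l * g + d ^+ 2 * l * g
       + (N - 4) * (- 1 + g - d ^+ 2 + d ^+ 2 * g))
  else x 2%N / x k * (1 + l * g - g) * (d * l ^+ 2 + 1 - 2 * d + d ^+ 2)).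

Definition z2B : 'cV[R]_n := mkcol n (fun k =>
  if k == 0%N then x 3%N * d * l *
      (l * g + l ^+ 2 - 2 * l - g + 1 + d * l - d + d * g)
  else if k == 1%N then x 3%N / x 1%N * l * (g + l - 1) * (1 + d * l - d)
  else if k == 2%N then x 3%N / x 2%N *
      (l ^+ 3 * d * g - (N - 2) * d * l ^+ 2 * (g - 1) - 2 * d * l
       + 2 * (N - 4) * d * (g - 1) + l + d ^+ 2 * l
       + (N - 4) * (1 - g + d ^+ 2 - d ^+ 2 * g))
  else if k == 3%N then l *
      (d * l ^+ 3 - (N - 1) * d * l ^+ 2 - (N - 3) * (d - 1) ^+ 2)
  else x 3%N / x k *
      (d * g * l ^+ 2 + l ^+ 3 * d - d * l ^+ 2 - 2 * d * l - 2 * d * g + 2 * d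
       - 1 + g + l + d ^+ 2 * l - d ^+ 2 + d ^+ 2 * g)).

Definition y2B : 'cV[R]_n := mkcol n (fun k =>
  if k == 0%N then x 4%N * d * l * (g ^+ 2 - 2 * g + l ^+ 2 * g + 1) * (d + l - 1)
  else if k == 1%N then x 4%N / x 1%N * l *
      (g ^+ 2 - 2 * g + l ^+ 2 * g + 1) * (1 + d * l - d)
  else if k == 2%N then x 4%N / x 2%N * g * l *
      (d * g * l ^+ 2 + l ^+ 3 * d - d * l ^+ 2 - 2 * d * l - 2 * d * g + 2 * d
       - 1 + g + l + d ^+ 2 * l - d ^+ 2 + d ^+ 2 * g)
  else if k == 3%N then x 4%N / x 3%N * l *
      (d * l ^+ 2 + l ^+ 3 * d * g - d * g * l ^+ 2 - 2 * l * d * g - 2 * d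
       + 2 * d * g - g + 1 + l * g + d ^+ 2 + d ^+ 2 * l * g - d ^+ 2 * g)
  else x 4%N / x k *
      (g ^+ 2 - 2 * g + l ^+ 2 * g + 1) * (d * l ^+ 2 + 1 - 2 * d + d ^+ 2)).
End Case2B.

End Defs.

(* Main.v *)
Require Import Defs.
From HB Require Import structures.
From mathcomp Require Import all_boot all_order all_algebra.
From mathcomp Require Import reals.
From mathcomp Require Import ring lra zify.
From Stdlib Require Import Lia.
Import Order.TTheory GRing.Theory Num.Theory.
Local Open Scope ring_scope.
Set Implicit Arguments. Unset Strict Implicit. Unset Printing Implicit Defensive.

Lemma sum_split (R : realType) (n K : nat) (G : nat -> R) (c : R) :
  (K <= n)%N -> (forall j, (K <= j < n)%N -> G j = c) ->
  \sum_(j < n) G j = \sum_(j < K) G j + (n - K)%:R * c.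
Proof.
move=> hK hG; rewrite -(big_mkord xpredT G) (big_cat_nat (n := K)) //=.
rewrite big_mkord; congr (_ + _).
rewrite (eq_big_nat _ _ (F2 := fun _ => c)) // sumr_const_nat mulr_natl //.
Qed.

Lemma eig_tr (R : realType) (n : nat) (A : 'M[R]_n) a :
  eigenvalue A a = eigenvalue A^T a.
Proof.
rewrite /eigenvalue /eigenspace !kermx_eq0 /row_free.
by rewrite -mxrank_tr linearB /= tr_scalar_mx.
Qed.

Lemma right_eig (R : realType) (n : nat) (A : 'M[R]_n) (v : 'cV[R]_n) a :
  A *m v = a *: v -> v != 0 -> eigenvalue A a.
Proof.
move=> hv hv0; rewrite eig_tr; apply/eigenvalueP; exists v^T.
  by rewrite -trmx_mul hv linearZ.
by rewrite trmx_eq0.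
Qed.

Lemma eig_right (R : realType) (n : nat) (A : 'M[R]_n) a :
  eigenvalue A a -> exists2 v : 'cV[R]_n, A *m v = a *: v & v != 0.
Proof.
rewrite eig_tr => /eigenvalueP [v hv hv0]; exists v^T.
  by rewrite -[A]trmxK -trmx_mul hv linearZ.
by rewrite trmx_eq0.
Qed.

Lemma posD (R : realType) (a b : R) : 0 < a -> 0 <= b -> 0 < a + b.
Proof. by move=> ha hb; apply: (lt_le_trans ha); rewrite lerDl. Qed.

Lemma pos_eq (R : realType) (F a : R) : F = a -> 0 < F -> 0 < a.
Proof. by move=> ->. Qed.

Lemma posq (R : realType) (c q Q G a : R) :
  0 < c -> q = 0 -> c * a = Q * q + G -> 0 < G -> 0 < a.
Proof.
move=> hc hq; rewrite hq mulr0 add0r => <-.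
by rewrite pmulr_rgt0.
Qed.

Lemma prop_lemma (R : realType) (a b c e : R) :
  c != 0 -> a * c - b * e = 0 -> a = b / c * e.
Proof.
move=> hc /eqP; rewrite subr_eq0 => /eqP h.
by rewrite mulrAC -h mulfK.
Qed.

Lemma root_above (R : realType) (f : {poly R}) (a b : R) :
  a <= b -> f.[a] < 0 -> 0 <= f.[b] -> exists2 mu, a < mu & root f mu.
Proof.
move=> hab ha hb.
have [mu /andP[h1 h2] hr] := @poly_ivt R f a b hab (introT andP (conj (ltW ha) hb)).
exists mu => //; rewrite lt_neqAle h1 andbT; apply/eqP => ea.
by move: hr; rewrite /root -ea lt_eqF.
Qed.

Lemma sqr_pos (R : realType) (d : R) : d != 1 -> 0 < (d - 1) ^+ 2.
Proof. by move=> hd; rewrite exprn_even_gt0 //= subr_eq0. Qed.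

Ltac nlia := repeat match goal with
  | H : is_true (@Order.lt _ _ _ _) |- _ => clear H
  | H : is_true (@Order.le _ _ _ _) |- _ => clear H
  | H : is_true (negb (@eq_op _ _ _)) |- _ => clear H
  end; lia.

Ltac sp := repeat first [ assumption | rewrite invr_gt0 | apply: addr_gt0 | apply: mulr_gt0
  | apply: divr_gt0 | apply: exprn_gt0 | (rewrite ltr0n //) | exact: ltr01 ].
Ltac nn := repeat first [ assumption | exact: sqr_ge0 | (apply: ltW; assumption)
  | rewrite invr_ge0 | apply: addr_ge0 | apply: mulr_ge0
  | apply: divr_ge0 | apply: exprn_ge0 | exact: ler01 | exact: ler0n ].

Definition Pf (R : realType) (x : nat -> R) (d g : R) (i j : nat) : R :=
    if (i == 0%N) && (j == 1%N) then d * x 1%N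
    else if (i == 1%N) && (j == 0%N) then (d * x 1%N)^-1
    else if (i == 0%N) && (j == 2%N) then g * x 2%N
    else if (i == 2%N) && (j == 0%N) then (g * x 2%N)^-1
    else x j / x i.

Definition QRf (R : realType) (x : nat -> R) (d g : R) (i j : nat) : R :=
    if (i == 0%N) && (j == 1%N) then d * x 1%N
    else if (i == 1%N) && (j == 0%N) then (d * x 1%N)^-1
    else if (i == 2%N) && (j == 3%N) then g * x 3%N / x 2%N
    else if (i == 3%N) && (j == 2%N) then x 2%N / (g * x 3%N)
    else x j / x i.

Definition q1 (R : realType) (N d g l : R) : R :=
  l^+2*(l - N) - ((N - 3)*((d - 1)^+2/d + (g - 1)^+2/g) + (g - d)^+2/(d*g)).
Definition q2A (R : realType) (d g l : R) : R :=
  l^+3*(l - 4) - 2*((d - 1)^+2/d + (g - 1)^+2/g) * l - (d - 1)^+2*(g - 1)^+2/(d*g).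
Definition q2B (R : realType) (N d g l : R) : R :=
  l^+4*(l - N) - ((N - 2)*((d - 1)^+2/d + (g - 1)^+2/g) * l^+2
     + (d - 1)^+2*(g - 1)^+2/(d*g) * l + (N - 4)*((d - 1)^+2*(g - 1)^+2/(d*g))).

Definition w1f (R : realType) (n : nat) (x : nat -> R) (d g l : R) (k : nat) : R :=
  if k == 0%N then d * g * l * (l - (n%:R) + 1)
  else if k == 1%N then (x 1%N)^-1 * (g * l - ((n%:R) - 2) * g + d + ((n%:R) - 3) * d * g)
  else if k == 2%N then (x 2%N)^-1 * (d * l - ((n%:R) - 2) * d + g + ((n%:R) - 3) * d * g)
  else (x k)^-1 * (g + d + d * g * l - 2 * d * g).

Definition u1f (R : realType) (n : nat) (x : nat -> R) (d g l : R) (k : nat) : R :=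
  if k == 0%N then x 1%N * g * l * (d * l - ((n%:R) - 2) * d + g + (n%:R) - 3)
  else if k == 1%N then g * l ^+ 3 - ((n%:R) - 1) * g * l ^+ 2 - ((n%:R) - 3) * (g ^+ 2 - 2 * g + 1)
  else if k == 2%N then x 1%N / x 2%N *
      (g * l ^+ 2 - g * l + d * l + ((n%:R) - 3) * (d * g - d - g + 1))
  else x 1%N / x k *
      (g * l ^+ 2 - g * l - g + d + d * g * l - d * g + g ^+ 2).

Definition v1f (R : realType) (n : nat) (x : nat -> R) (d g l : R) (k : nat) : R :=
  if k == 0%N then x 2%N * d * l * (d + g * l - ((n%:R) - 2) * g + (n%:R) - 3)
  else if k == 1%N then x 2%N / x 1%N *
      (d * l ^+ 2 - d * l + g * l + ((n%:R) - 3) * (d * g - d - g + 1))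
  else if k == 2%N then d * l ^+ 3 - ((n%:R) - 1) * d * l ^+ 2 - ((n%:R) - 3) * (d ^+ 2 - 2 * d + 1)
  else x 2%N / x k *
      (d * l ^+ 2 - d * l + g - d + d ^+ 2 + d * g * l - d * g).

Definition z1f (R : realType) (n : nat) (x : nat -> R) (d g l : R) (k : nat) : R :=
  if k == 0%N then x 3%N * d * g * l * (d + g + l - 2)
  else if k == 1%N then x 3%N / x 1%N *
      (d * g * l ^+ 2 - d * g * l + g ^+ 2 + g * l - g - d * g + d)
  else if k == 2%N then x 3%N / x 2%N *
      (d * g * l ^+ 2 - d * g * l - d * g + g + d ^+ 2 + d * l - d)
  else x 3%N / x k *
      (d * g * l ^+ 2 - 4 * d * g + g + d + d ^+ 2 * g + g ^+ 2 * d).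

Lemma eigE1 (R : realType) n (x : nat -> R) d g l : (4 <= n)%N -> x 0%N = 1 ->
  (forall i, (1 <= i < n)%N -> 0 < x i) -> 0 < d -> 0 < g -> q1 (n%:R) d g l = 0 ->
  Pmat n x d g *m w1 n x d g l = l *: w1 n x d g l.
Proof.
move=> hn hx0 hx hd hg hq.
have xn0 : forall i, (1 <= i < n)%N -> x i != 0 by move=> i /hx /lt0r_neq0.
have d0 : d != 0 by exact: lt0r_neq0.
have g0 : g != 0 by exact: lt0r_neq0.
have hx1 : 0 < x 1%N by apply: hx; nlia.
have x1 : x 1%N != 0 by exact: lt0r_neq0.
have hx2 : 0 < x 2%N by apply: hx; nlia.
have x2 : x 2%N != 0 by exact: lt0r_neq0.
have hx3 : 0 < x 3%N by apply: hx; nlia.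
have x3 : x 3%N != 0 by exact: lt0r_neq0.
apply/matrixP => i j; rewrite ord1 !mxE.
rewrite (eq_bigr (fun k : 'I_n => Pf x d g i k * w1f n x d g l k)); last by move=> k _; rewrite !mxE.
have xi0 : x i != 0.
  case: i => [[|i] hi] /=; first by rewrite hx0 oner_neq0.
  by apply: xn0; rewrite /=; nlia.
have hKn : (3 <= n)%N by nlia.
rewrite (@sum_split R n 3 (fun k => Pf x d g i k * w1f n x d g l k) ((g + d + d * g * l - 2 * d * g) / x i) hKn); last first.
  move=> k /andP[hk3 hkn]; rewrite /Pf /w1f.
  case: k hk3 hkn => [|[|[|k]]] //= _ hkn; rewrite !andbF /=.
  have xk0 : x k.+3 != 0 by apply: xn0; rewrite /=; nlia.
  field; by rewrite ?d0 ?g0 ?x1 ?x2 ?x3 ?x4 ?xi0 ?xk0 ?hl0.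
rewrite !big_ord_recr big_ord0 /=.
case: i xi0 => [[|[|[|i]]] hi] /= xi0; rewrite /Pf /w1f /= ?hx0 ?natrB //.
- apply/eqP; rewrite -subr_eq0; apply/eqP.
  transitivity ((- d * g) * q1 (n%:R) d g l); last by rewrite hq mulr0.
  rewrite /q1; field; by rewrite ?d0 ?g0 ?x1 ?x2 ?x3 ?x4 ?xi0 ?xk0 ?hl0.
- apply/eqP; rewrite -subr_eq0; apply/eqP.
  transitivity (0 * q1 (n%:R) d g l); last by rewrite hq mulr0.
  rewrite /q1; field; by rewrite ?d0 ?g0 ?x1 ?x2 ?x3 ?x4 ?xi0 ?xk0 ?hl0.
- apply/eqP; rewrite -subr_eq0; apply/eqP.
  transitivity (0 * q1 (n%:R) d g l); last by rewrite hq mulr0.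
  rewrite /q1; field; by rewrite ?d0 ?g0 ?x1 ?x2 ?x3 ?x4 ?xi0 ?xk0 ?hl0.
- apply/eqP; rewrite -subr_eq0; apply/eqP.
  transitivity (0 * q1 (n%:R) d g l); last by rewrite hq mulr0.
  rewrite /q1; field; by rewrite ?d0 ?g0 ?x1 ?x2 ?x3 ?x4 ?xi0 ?xk0 ?hl0.
Qed.

Definition E1_0 (R : realType) (N l d g t0 t1 t2 e : R) : R := t0 + d * t1 + g * t2 + (N - 3) * e - l * t0.
Definition E1_1 (R : realType) (N l d g t0 t1 t2 e : R) : R := d^-1 * t0 + t1 + t2 + (N - 3) * e - l * t1.
Definition E1_2 (R : realType) (N l d g t0 t1 t2 e : R) : R := g^-1 * t0 + t1 + t2 + (N - 3) * e - l * t2.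
Definition E1_3 (R : realType) (N l d g t0 t1 t2 e : R) : R := t0 + t1 + t2 + (N - 3) * e - l * e.
Lemma alg1 (R : realType) (N l d g t0 t1 t2 e : R) : d != 0 -> g != 0 ->
  E1_0 N l d g t0 t1 t2 e = 0 -> E1_1 N l d g t0 t1 t2 e = 0 -> E1_2 N l d g t0 t1 t2 e = 0 -> E1_3 N l d g t0 t1 t2 e = 0 ->
  [/\ (l * q1 N d g l) * t0 = 0, (l * q1 N d g l) * t1 = 0, (l * q1 N d g l) * t2 = 0 & (l * q1 N d g l) * e = 0].
Proof.
move=> d0 g0 h0 h1 h2 h3; split.
- transitivity ((- l^+2 + l^+2 * N - l^+3) * E1_0 N l d g t0 t1 t2 e + (3%:R * l - l * N - l * g - 2%:R * l * d + l * d * N - l^+2 * d) * E1_1 N l d g t0 t1 t2 e + (3%:R * l - l * N - 2%:R * l * g + l * g * N - l * d - l^+2 * g) * E1_2 N l d g t0 t1 t2 e + (- 6%:R * l + 2%:R * l * N + 3%:R * l * g - l * g * N + 3%:R * l * d - l * d * N + 3%:R * l^+2 - l^+2 * N) * E1_3 N l d g t0 t1 t2 e).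
    rewrite /q1 /E1_0 /E1_1 /E1_2 /E1_3; field; by rewrite ?d0 ?g0 ?x1 ?x2 ?x3 ?x4 ?xi0 ?xk0 ?hl0.
  by rewrite h0 h1 h2 h3 !mulr0 !addr0.
- transitivity ((- (2%:R * l) / (d) + (l * N) / (d) - (l) / (g) + 3%:R * l - l * N - (l^+2) / (d)) * E1_0 N l d g t0 t1 t2 e + (- (3%:R) / (g) + (N) / (g) + 6%:R - 2%:R * N - 3%:R * g + g * N - l^+2 + l^+2 * N - l^+3) * E1_1 N l d g t0 t1 t2 e + ((3%:R) / (d) - (N) / (d) - (3%:R * g) / (d) + (g * N) / (d) - 3%:R + N + 3%:R * g - g * N - (l * g) / (d) + l - l^+2) * E1_2 N l d g t0 t1 t2 e + (- (3%:R) / (d) + (N) / (d) + (3%:R * g) / (d) - (g * N) / (d) + (3%:R) / (g) - (N) / (g) - 3%:R + N + (3%:R * l) / (d) - (l * N) / (d) - 3%:R * l + l * N + 3%:R * l^+2 - l^+2 * N) * E1_3 N l d g t0 t1 t2 e).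
    rewrite /q1 /E1_0 /E1_1 /E1_2 /E1_3; field; by rewrite ?d0 ?g0 ?x1 ?x2 ?x3 ?x4 ?xi0 ?xk0 ?hl0.
  by rewrite h0 h1 h2 h3 !mulr0 !addr0.
- transitivity ((- (l) / (d) - (2%:R * l) / (g) + (l * N) / (g) + 3%:R * l - l * N - (l^+2) / (g)) * E1_0 N l d g t0 t1 t2 e + ((3%:R) / (g) - (N) / (g) - 3%:R + N - (3%:R * d) / (g) + (d * N) / (g) + 3%:R * d - d * N + l - (l * d) / (g) - l^+2) * E1_1 N l d g t0 t1 t2 e + (- (3%:R) / (d) + (N) / (d) + 6%:R - 2%:R * N - 3%:R * d + d * N - l^+2 + l^+2 * N - l^+3) * E1_2 N l d g t0 t1 t2 e + ((3%:R) / (d) - (N) / (d) - (3%:R) / (g) + (N) / (g) - 3%:R + N + (3%:R * d) / (g) - (d * N) / (g) + (3%:R * l) / (g) - (l * N) / (g) - 3%:R * l + l * N + 3%:R * l^+2 - l^+2 * N) * E1_3 N l d g t0 t1 t2 e).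
    rewrite /q1 /E1_0 /E1_1 /E1_2 /E1_3; field; by rewrite ?d0 ?g0 ?x1 ?x2 ?x3 ?x4 ?xi0 ?xk0 ?hl0.
  by rewrite h0 h1 h2 h3 !mulr0 !addr0.
- transitivity ((- (l) / (d) - (l) / (g) + 2%:R * l - l^+2) * E1_0 N l d g t0 t1 t2 e + (1%:R - g - (d) / (g) + d + l - l * d - l^+2) * E1_1 N l d g t0 t1 t2 e + (- (g) / (d) + 1%:R + g - d + l - l * g - l^+2) * E1_2 N l d g t0 t1 t2 e + ((g) / (d) - 2%:R + (d) / (g) + 3%:R * l^+2 - l^+3) * E1_3 N l d g t0 t1 t2 e).
    rewrite /q1 /E1_0 /E1_1 /E1_2 /E1_3; field; by rewrite ?d0 ?g0 ?x1 ?x2 ?x3 ?x4 ?xi0 ?xk0 ?hl0.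
  by rewrite h0 h1 h2 h3 !mulr0 !addr0.
Qed.

Lemma eigR1 (R : realType) n (x : nat -> R) d g l (v : 'cV[R]_n) : (4 <= n)%N -> x 0%N = 1 ->
  (forall i, (1 <= i < n)%N -> 0 < x i) -> 0 < d -> 0 < g -> l != 0 ->
  Pmat n x d g *m v = l *: v -> v != 0 -> q1 n%:R d g l = 0.
Proof.
move=> hn; case: n hn v => [//|n] hn v hx0 hx hd hg hl0 hv hv0.
have xn0 : forall i, (i < n.+1)%N -> x i != 0.
  move=> [|i] hi; first by rewrite hx0 oner_neq0.
  by apply: lt0r_neq0; apply: hx; nlia.
have hK : (3 <= n.+1)%N by nlia.
have d0 : d != 0 by exact: lt0r_neq0.
have g0 : g != 0 by exact: lt0r_neq0.
pose vv := fun k : nat => v (inord k) ord0.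
pose t := fun k : nat => x k * vv k.
have vvE : forall j : 'I_n.+1, v j ord0 = vv j by move=> j; rewrite /vv inord_val.
have rowN : forall r, (r < n.+1)%N -> \sum_(j < n.+1) Pf x d g r j * vv j = l * vv r.
  move=> r hr; have H : (Pmat n.+1 x d g *m v) (inord r) ord0 = (l *: v) (inord r) ord0 by rewrite hv.
  rewrite !mxE in H; rewrite (_ : l * vv r = l * v (inord r) ord0) // -H.
  by apply: eq_bigr => j _; rewrite !mxE inordK // vvE.
have MFgen : forall r j, (3 <= j)%N -> Pf x d g r j = x j / x r.
  by move=> r [|[|[|j]]] // _; rewrite /Pf /= !andbF.
have MFrow : forall r j, (3 <= r)%N -> Pf x d g r j = x j / x r.
  by move=> [|[|[|r]]] j // _; rewrite /Pf /=.
pose S := \sum_(j < n.+1) t j.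
pose e := S / l.
have gen : forall r, (3 <= r < n.+1)%N -> t r = e.
  move=> r /andP[h1 h2]; have := rowN r h2.
  rewrite (eq_bigr (fun j : 'I_n.+1 => t j / x r)); last by move=> j _; rewrite MFrow // mulrAC.
  rewrite -mulr_suml -/S => H.
  have xr := xn0 r h2.
  rewrite /e /t -(mulKf hl0 (vv r)) -H; field; by rewrite xr hl0.
have lowrow : forall r, (r < n.+1)%N -> \sum_(j < n.+1) Pf x d g r j * vv j =
    \sum_(j < 3) Pf x d g r j * vv j + (n.+1 - 3)%:R * (e / x r).
  move=> r hr; rewrite (@sum_split R n.+1 3 (fun j => Pf x d g r j * vv j) (e / x r) hK) // => j /andP[h1 h2].
  have hj : (3 <= j < n.+1)%N by rewrite h1 h2.
  by rewrite MFgen // mulrAC -/(t j) gen.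
have SE : S = \sum_(j < 3) t j + (n.+1 - 3)%:R * e.
  by rewrite /S (@sum_split R n.+1 3 t e hK) // => j hj; apply: gen.
have E0 : E1_0 n.+1%:R l d g (t 0) (t 1) (t 2) e = 0.
  have xr : x 0%N != 0 by apply: xn0; nlia.
  transitivity (x 0%N * ((\sum_(j < 3) Pf x d g 0 j * vv j + (n.+1 - 3)%:R * (e / x 0%N)) - l * vv 0%N)).
    rewrite /E1_0 !big_ord_recr big_ord0 /= /Pf /t /= ?hx0 ?natrB //; field; by rewrite ?d0 ?g0 ?x1 ?x2 ?x3 ?x4 ?xi0 ?xk0 ?hl0 ?xr.
  rewrite -lowrow ?rowN ?subrr ?mulr0 //; nlia.
have E1 : E1_1 n.+1%:R l d g (t 0) (t 1) (t 2) e = 0.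
  have xr : x 1%N != 0 by apply: xn0; nlia.
  transitivity (x 1%N * ((\sum_(j < 3) Pf x d g 1 j * vv j + (n.+1 - 3)%:R * (e / x 1%N)) - l * vv 1%N)).
    rewrite /E1_1 !big_ord_recr big_ord0 /= /Pf /t /= ?hx0 ?natrB //; field; by rewrite ?d0 ?g0 ?x1 ?x2 ?x3 ?x4 ?xi0 ?xk0 ?hl0 ?xr.
  rewrite -lowrow ?rowN ?subrr ?mulr0 //; nlia.
have E2 : E1_2 n.+1%:R l d g (t 0) (t 1) (t 2) e = 0.
  have xr : x 2%N != 0 by apply: xn0; nlia.
  transitivity (x 2%N * ((\sum_(j < 3) Pf x d g 2 j * vv j + (n.+1 - 3)%:R * (e / x 2%N)) - l * vv 2%N)).
    rewrite /E1_2 !big_ord_recr big_ord0 /= /Pf /t /= ?hx0 ?natrB //; field; by rewrite ?d0 ?g0 ?x1 ?x2 ?x3 ?x4 ?xi0 ?xk0 ?hl0 ?xr.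
  rewrite -lowrow ?rowN ?subrr ?mulr0 //; nlia.
have E3 : E1_3 n.+1%:R l d g (t 0) (t 1) (t 2) e = 0.
  transitivity (S - l * e).
    rewrite SE /E1_3 !big_ord_recr big_ord0 /= natrB //; ring.
  by rewrite /e; field; rewrite hl0.
case: (eqVneq (q1 n.+1%:R d g l) 0) => // hq.
have hP : (l * q1 n.+1%:R d g l) != 0 by rewrite ?oppr_eq0 ?mulf_neq0.
have [h0 h1 h2 h3] := @alg1 R n.+1%:R l d g (t 0) (t 1) (t 2) e d0 g0 E0 E1 E2 E3.
have tz : forall j, (j < n.+1)%N -> t j = 0.
  move=> j hj; case: j hj => [|[|[|j]]] hj.
  - by move/eqP: h0; rewrite mulf_eq0 (negbTE hP) => /eqP.
  - by move/eqP: h1; rewrite mulf_eq0 (negbTE hP) => /eqP.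
  - by move/eqP: h2; rewrite mulf_eq0 (negbTE hP) => /eqP.
  - rewrite gen; last by rewrite hj.
    by move/eqP: h3; rewrite mulf_eq0 (negbTE hP) => /eqP.
case/negP: hv0; apply/eqP/matrixP => j k; rewrite ord1 !mxE vvE.
have := tz j (ltn_ord j); rewrite /t => /eqP; rewrite mulf_eq0 (negbTE (xn0 _ (ltn_ord j))) /=.
by move/eqP.
Qed.

Lemma wpos1 (R : realType) n (x : nat -> R) d g l : (4 <= n)%N -> x 0%N = 1 ->
  (forall i, (1 <= i < n)%N -> 0 < x i) -> 0 < d -> 0 < g -> n%:R < l -> q1 (n%:R) d g l = 0 ->
  forall k, (k < n)%N -> 0 < w1f n x d g l k.
Proof.
move=> hn hx0 hx hd hg hl hq.
have d0 : d != 0 by exact: lt0r_neq0.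
have g0 : g != 0 by exact: lt0r_neq0.
have hl0' : 0 < l by apply: lt_trans hl; rewrite ltr0n; nlia.
have hl0 : l != 0 by exact: lt0r_neq0.
have ha : 0 < l - n%:R by rewrite subr_gt0.
have hk : 0 <= n%:R - 4 :> R by rewrite subr_ge0 (ler_nat R 4 n).
have hk2 : 0 <= n%:R - 2 :> R by rewrite subr_ge0 (ler_nat R 2 n); nlia.
have hk4 : 0 <= n%:R - 4 :> R by rewrite subr_ge0 (ler_nat R 4 n); nlia.
have hx1 : 0 < x 1%N by apply: hx; nlia.
have x1 : x 1%N != 0 by exact: lt0r_neq0.
have hx2 : 0 < x 2%N by apply: hx; nlia.
have x2 : x 2%N != 0 by exact: lt0r_neq0.
have hx3 : 0 < x 3%N by apply: hx; nlia.
have x3 : x 3%N != 0 by exact: lt0r_neq0.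
move=> k hk'; case: k hk' => [|[|[|k]]] hk'; rewrite /w1f /=.
- apply: (@pos_eq R ((4%:R * d * g + 5%:R * d * g * (l - n%:R) + d * g * (l - n%:R)^+2) + (d * g * (n%:R - 4) + d * g * (l - n%:R) * (n%:R - 4)))); [first [ring | clear hq; field; by rewrite ?d0 ?g0 ?x1 ?x2 ?x3 ?x4 ?xi0 ?xk0 ?hl0] | apply: posD; [sp | nn]].
- apply: (@pos_eq R (((2%:R * g) / ((x 1%N)) + (g * (l - n%:R)) / ((x 1%N)) + (d) / ((x 1%N)) + (d * g) / ((x 1%N))) + ((d * g * (n%:R - 4)) / ((x 1%N))))); [first [ring | clear hq; field; by rewrite ?d0 ?g0 ?x1 ?x2 ?x3 ?x4 ?xi0 ?xk0 ?hl0] | apply: posD; [sp | nn]].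
- apply: (@pos_eq R (((g) / ((x 2%N)) + (2%:R * d) / ((x 2%N)) + (d * (l - n%:R)) / ((x 2%N)) + (d * g) / ((x 2%N))) + ((d * g * (n%:R - 4)) / ((x 2%N))))); [first [ring | clear hq; field; by rewrite ?d0 ?g0 ?x1 ?x2 ?x3 ?x4 ?xi0 ?xk0 ?hl0] | apply: posD; [sp | nn]].
- have hxk : 0 < x k.+3 by apply: hx; nlia.
  have xk0 : x k.+3 != 0 by exact: lt0r_neq0.
  apply: (@pos_eq R (((g) / ((x k.+3)) + (d) / ((x k.+3)) + (2%:R * d * g) / ((x k.+3)) + (d * g * (l - n%:R)) / ((x k.+3))) + ((d * g * (n%:R - 4)) / ((x k.+3))))); [first [ring | clear hq; field; by rewrite ?d0 ?g0 ?x1 ?x2 ?x3 ?x4 ?xi0 ?xk0 ?hl0] | apply: posD; [sp | nn]].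
Qed.

Lemma upos1 (R : realType) n (x : nat -> R) d g l : (4 <= n)%N -> x 0%N = 1 ->
  (forall i, (1 <= i < n)%N -> 0 < x i) -> 0 < d -> 0 < g -> n%:R < l -> q1 (n%:R) d g l = 0 ->
  0 < u1f n x d g l 0.
Proof.
move=> hn hx0 hx hd hg hl hq.
have d0 : d != 0 by exact: lt0r_neq0.
have g0 : g != 0 by exact: lt0r_neq0.
have hl0' : 0 < l by apply: lt_trans hl; rewrite ltr0n; nlia.
have hl0 : l != 0 by exact: lt0r_neq0.
have ha : 0 < l - n%:R by rewrite subr_gt0.
have hk : 0 <= n%:R - 4 :> R by rewrite subr_ge0 (ler_nat R 4 n).
have hk2 : 0 <= n%:R - 2 :> R by rewrite subr_ge0 (ler_nat R 2 n); nlia.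
have hk4 : 0 <= n%:R - 4 :> R by rewrite subr_ge0 (ler_nat R 4 n); nlia.
have hx1 : 0 < x 1%N by apply: hx; nlia.
have x1 : x 1%N != 0 by exact: lt0r_neq0.
have hx2 : 0 < x 2%N by apply: hx; nlia.
have x2 : x 2%N != 0 by exact: lt0r_neq0.
have hx3 : 0 < x 3%N by apply: hx; nlia.
have x3 : x 3%N != 0 by exact: lt0r_neq0.
rewrite /u1f /=.
- apply: (@pos_eq R ((4%:R * g * (x 1%N) + g * (x 1%N) * (l - n%:R) + 4%:R * g^+2 * (x 1%N) + g^+2 * (x 1%N) * (l - n%:R) + 8%:R * d * g * (x 1%N) + 6%:R * d * g * (x 1%N) * (l - n%:R) + d * g * (x 1%N) * (l - n%:R)^+2) + (5%:R * g * (x 1%N) * (n%:R - 4) + g * (x 1%N) * (n%:R - 4)^+2 + g * (x 1%N) * (l - n%:R) * (n%:R - 4) + g^+2 * (x 1%N) * (n%:R - 4) + 2%:R * d * g * (x 1%N) * (n%:R - 4) + d * g * (x 1%N) * (l - n%:R) * (n%:R - 4)))); [first [ring | clear hq; field; by rewrite ?d0 ?g0 ?x1 ?x2 ?x3 ?x4 ?xi0 ?xk0 ?hl0] | apply: posD; [sp | nn]].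
Qed.

Lemma prop1u (R : realType) n (x : nat -> R) d g l : (4 <= n)%N -> x 0%N = 1 ->
  (forall i, (1 <= i < n)%N -> 0 < x i) -> 0 < d -> 0 < g -> q1 (n%:R) d g l = 0 ->
  0 < u1f n x d g l 0 ->
  w1 n x d g l = (w1f n x d g l 0 / u1f n x d g l 0) *: u1 n x d g l.
Proof.
move=> hn hx0 hx hd hg hq hu.
have d0 : d != 0 by exact: lt0r_neq0.
have g0 : g != 0 by exact: lt0r_neq0.
have hx1 : 0 < x 1%N by apply: hx; nlia.
have x1 : x 1%N != 0 by exact: lt0r_neq0.
have hx2 : 0 < x 2%N by apply: hx; nlia.
have x2 : x 2%N != 0 by exact: lt0r_neq0.
have hx3 : 0 < x 3%N by apply: hx; nlia.
have x3 : x 3%N != 0 by exact: lt0r_neq0.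
apply/matrixP => i j; rewrite ord1 !mxE.
apply: prop_lemma; first exact: lt0r_neq0.
case: i => [[|[|[|i]]] hi] /=.
- transitivity (0 * q1 (n%:R) d g l); last by rewrite hq mulr0.
  rewrite /w1f /u1f /q1 /= ?hx0; field; by rewrite ?d0 ?g0 ?x1 ?x2 ?x3 ?x4 ?xi0 ?xk0 ?hl0.
- transitivity ((- 2%:R * l * d * g^+2 + l * d * g^+2 * (n%:R) - l^+2 * d * g^+2) * q1 (n%:R) d g l); last by rewrite hq mulr0.
  rewrite /w1f /u1f /q1 /= ?hx0; field; by rewrite ?d0 ?g0 ?x1 ?x2 ?x3 ?x4 ?xi0 ?xk0 ?hl0.
- transitivity ((- (l * d * g^+2 * (x 1%N)) / ((x 2%N))) * q1 (n%:R) d g l); last by rewrite hq mulr0.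
  rewrite /w1f /u1f /q1 /= ?hx0; field; by rewrite ?d0 ?g0 ?x1 ?x2 ?x3 ?x4 ?xi0 ?xk0 ?hl0.
- have xk0 : x i.+3 != 0 by apply: lt0r_neq0; apply: hx; nlia.
  transitivity ((- (l * d * g^+2 * (x 1%N)) / ((x i.+3))) * q1 (n%:R) d g l); last by rewrite hq mulr0.
  rewrite /w1f /u1f /q1 /= ?hx0; field; by rewrite ?d0 ?g0 ?x1 ?x2 ?x3 ?x4 ?xi0 ?xk0 ?hl0.
Qed.

Lemma vpos1 (R : realType) n (x : nat -> R) d g l : (4 <= n)%N -> x 0%N = 1 ->
  (forall i, (1 <= i < n)%N -> 0 < x i) -> 0 < d -> 0 < g -> n%:R < l -> q1 (n%:R) d g l = 0 ->
  0 < v1f n x d g l 0.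
Proof.
move=> hn hx0 hx hd hg hl hq.
have d0 : d != 0 by exact: lt0r_neq0.
have g0 : g != 0 by exact: lt0r_neq0.
have hl0' : 0 < l by apply: lt_trans hl; rewrite ltr0n; nlia.
have hl0 : l != 0 by exact: lt0r_neq0.
have ha : 0 < l - n%:R by rewrite subr_gt0.
have hk : 0 <= n%:R - 4 :> R by rewrite subr_ge0 (ler_nat R 4 n).
have hk2 : 0 <= n%:R - 2 :> R by rewrite subr_ge0 (ler_nat R 2 n); nlia.
have hk4 : 0 <= n%:R - 4 :> R by rewrite subr_ge0 (ler_nat R 4 n); nlia.
have hx1 : 0 < x 1%N by apply: hx; nlia.
have x1 : x 1%N != 0 by exact: lt0r_neq0.
have hx2 : 0 < x 2%N by apply: hx; nlia.
have x2 : x 2%N != 0 by exact: lt0r_neq0.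
have hx3 : 0 < x 3%N by apply: hx; nlia.
have x3 : x 3%N != 0 by exact: lt0r_neq0.
rewrite /v1f /=.
- apply: (@pos_eq R ((4%:R * d * (x 2%N) + d * (x 2%N) * (l - n%:R) + 8%:R * d * g * (x 2%N) + 6%:R * d * g * (x 2%N) * (l - n%:R) + d * g * (x 2%N) * (l - n%:R)^+2 + 4%:R * d^+2 * (x 2%N) + d^+2 * (x 2%N) * (l - n%:R)) + (5%:R * d * (x 2%N) * (n%:R - 4) + d * (x 2%N) * (n%:R - 4)^+2 + d * (x 2%N) * (l - n%:R) * (n%:R - 4) + 2%:R * d * g * (x 2%N) * (n%:R - 4) + d * g * (x 2%N) * (l - n%:R) * (n%:R - 4) + d^+2 * (x 2%N) * (n%:R - 4)))); [first [ring | clear hq; field; by rewrite ?d0 ?g0 ?x1 ?x2 ?x3 ?x4 ?xi0 ?xk0 ?hl0] | apply: posD; [sp | nn]].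
Qed.

Lemma prop1v (R : realType) n (x : nat -> R) d g l : (4 <= n)%N -> x 0%N = 1 ->
  (forall i, (1 <= i < n)%N -> 0 < x i) -> 0 < d -> 0 < g -> q1 (n%:R) d g l = 0 ->
  0 < v1f n x d g l 0 ->
  w1 n x d g l = (w1f n x d g l 0 / v1f n x d g l 0) *: v1 n x d g l.
Proof.
move=> hn hx0 hx hd hg hq hu.
have d0 : d != 0 by exact: lt0r_neq0.
have g0 : g != 0 by exact: lt0r_neq0.
have hx1 : 0 < x 1%N by apply: hx; nlia.
have x1 : x 1%N != 0 by exact: lt0r_neq0.
have hx2 : 0 < x 2%N by apply: hx; nlia.
have x2 : x 2%N != 0 by exact: lt0r_neq0.
have hx3 : 0 < x 3%N by apply: hx; nlia.
have x3 : x 3%N != 0 by exact: lt0r_neq0.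
apply/matrixP => i j; rewrite ord1 !mxE.
apply: prop_lemma; first exact: lt0r_neq0.
case: i => [[|[|[|i]]] hi] /=.
- transitivity (0 * q1 (n%:R) d g l); last by rewrite hq mulr0.
  rewrite /w1f /v1f /q1 /= ?hx0; field; by rewrite ?d0 ?g0 ?x1 ?x2 ?x3 ?x4 ?xi0 ?xk0 ?hl0.
- transitivity ((- (l * d^+2 * g * (x 2%N)) / ((x 1%N))) * q1 (n%:R) d g l); last by rewrite hq mulr0.
  rewrite /w1f /v1f /q1 /= ?hx0; field; by rewrite ?d0 ?g0 ?x1 ?x2 ?x3 ?x4 ?xi0 ?xk0 ?hl0.
- transitivity ((- 2%:R * l * d^+2 * g + l * d^+2 * g * (n%:R) - l^+2 * d^+2 * g) * q1 (n%:R) d g l); last by rewrite hq mulr0.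
  rewrite /w1f /v1f /q1 /= ?hx0; field; by rewrite ?d0 ?g0 ?x1 ?x2 ?x3 ?x4 ?xi0 ?xk0 ?hl0.
- have xk0 : x i.+3 != 0 by apply: lt0r_neq0; apply: hx; nlia.
  transitivity ((- (l * d^+2 * g * (x 2%N)) / ((x i.+3))) * q1 (n%:R) d g l); last by rewrite hq mulr0.
  rewrite /w1f /v1f /q1 /= ?hx0; field; by rewrite ?d0 ?g0 ?x1 ?x2 ?x3 ?x4 ?xi0 ?xk0 ?hl0.
Qed.

Lemma zpos1 (R : realType) n (x : nat -> R) d g l : (4 <= n)%N -> x 0%N = 1 ->
  (forall i, (1 <= i < n)%N -> 0 < x i) -> 0 < d -> 0 < g -> n%:R < l -> q1 (n%:R) d g l = 0 ->
  0 < z1f n x d g l 0.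
Proof.
move=> hn hx0 hx hd hg hl hq.
have d0 : d != 0 by exact: lt0r_neq0.
have g0 : g != 0 by exact: lt0r_neq0.
have hl0' : 0 < l by apply: lt_trans hl; rewrite ltr0n; nlia.
have hl0 : l != 0 by exact: lt0r_neq0.
have ha : 0 < l - n%:R by rewrite subr_gt0.
have hk : 0 <= n%:R - 4 :> R by rewrite subr_ge0 (ler_nat R 4 n).
have hk2 : 0 <= n%:R - 2 :> R by rewrite subr_ge0 (ler_nat R 2 n); nlia.
have hk4 : 0 <= n%:R - 4 :> R by rewrite subr_ge0 (ler_nat R 4 n); nlia.
have hx1 : 0 < x 1%N by apply: hx; nlia.
have x1 : x 1%N != 0 by exact: lt0r_neq0.
have hx2 : 0 < x 2%N by apply: hx; nlia.
have x2 : x 2%N != 0 by exact: lt0r_neq0.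
have hx3 : 0 < x 3%N by apply: hx; nlia.
have x3 : x 3%N != 0 by exact: lt0r_neq0.
rewrite /z1f /=.
- apply: (@pos_eq R ((8%:R * d * g * (x 3%N) + 6%:R * d * g * (x 3%N) * (l - n%:R) + d * g * (x 3%N) * (l - n%:R)^+2 + 4%:R * d * g^+2 * (x 3%N) + d * g^+2 * (x 3%N) * (l - n%:R) + 4%:R * d^+2 * g * (x 3%N) + d^+2 * g * (x 3%N) * (l - n%:R)) + (6%:R * d * g * (x 3%N) * (n%:R - 4) + d * g * (x 3%N) * (n%:R - 4)^+2 + 2%:R * d * g * (x 3%N) * (l - n%:R) * (n%:R - 4) + d * g^+2 * (x 3%N) * (n%:R - 4) + d^+2 * g * (x 3%N) * (n%:R - 4)))); [first [ring | clear hq; field; by rewrite ?d0 ?g0 ?x1 ?x2 ?x3 ?x4 ?xi0 ?xk0 ?hl0] | apply: posD; [sp | nn]].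
Qed.

Lemma prop1z (R : realType) n (x : nat -> R) d g l : (4 <= n)%N -> x 0%N = 1 ->
  (forall i, (1 <= i < n)%N -> 0 < x i) -> 0 < d -> 0 < g -> q1 (n%:R) d g l = 0 ->
  0 < z1f n x d g l 0 ->
  w1 n x d g l = (w1f n x d g l 0 / z1f n x d g l 0) *: z1 n x d g l.
Proof.
move=> hn hx0 hx hd hg hq hu.
have d0 : d != 0 by exact: lt0r_neq0.
have g0 : g != 0 by exact: lt0r_neq0.
have hx1 : 0 < x 1%N by apply: hx; nlia.
have x1 : x 1%N != 0 by exact: lt0r_neq0.
have hx2 : 0 < x 2%N by apply: hx; nlia.
have x2 : x 2%N != 0 by exact: lt0r_neq0.
have hx3 : 0 < x 3%N by apply: hx; nlia.
have x3 : x 3%N != 0 by exact: lt0r_neq0.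
apply/matrixP => i j; rewrite ord1 !mxE.
apply: prop_lemma; first exact: lt0r_neq0.
case: i => [[|[|[|i]]] hi] /=.
- transitivity (0 * q1 (n%:R) d g l); last by rewrite hq mulr0.
  rewrite /w1f /z1f /q1 /= ?hx0; field; by rewrite ?d0 ?g0 ?x1 ?x2 ?x3 ?x4 ?xi0 ?xk0 ?hl0.
- transitivity ((- (l * d^+2 * g^+2 * (x 3%N)) / ((x 1%N))) * q1 (n%:R) d g l); last by rewrite hq mulr0.
  rewrite /w1f /z1f /q1 /= ?hx0; field; by rewrite ?d0 ?g0 ?x1 ?x2 ?x3 ?x4 ?xi0 ?xk0 ?hl0.
- transitivity ((- (l * d^+2 * g^+2 * (x 3%N)) / ((x 2%N))) * q1 (n%:R) d g l); last by rewrite hq mulr0.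
  rewrite /w1f /z1f /q1 /= ?hx0; field; by rewrite ?d0 ?g0 ?x1 ?x2 ?x3 ?x4 ?xi0 ?xk0 ?hl0.
- have xk0 : x i.+3 != 0 by apply: lt0r_neq0; apply: hx; nlia.
  transitivity ((- (l * d^+2 * g^+2 * (x 3%N)) / ((x i.+3))) * q1 (n%:R) d g l); last by rewrite hq mulr0.
  rewrite /w1f /z1f /q1 /= ?hx0; field; by rewrite ?d0 ?g0 ?x1 ?x2 ?x3 ?x4 ?xi0 ?xk0 ?hl0.
Qed.


Definition w2Af (R : realType) (x : nat -> R) (d g l : R) (k : nat) : R :=
  if k == 0%N then d * (l ^+ 3 * g - 3 * l ^+ 2 * g - 1 + 2 * g - g ^+ 2)
  else if k == 1%N then (x 1%N)^-1 *
      (l ^+ 2 * g - 2 * l * g + d + 2 * l * d * g - 2 * d * g + d * g ^+ 2)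
  else if k == 2%N then g / x 2%N *
      (g + l - 1 + d * l ^+ 2 - 2 * l * d + d + l * d * g - d * g)
  else (x 3%N)^-1 *
      (1 + l * g - g + l * d - d + d * g * l ^+ 2 - 2 * l * d * g + d * g).

Definition u2Af (R : realType) (x : nat -> R) (d g l : R) (k : nat) : R :=
  if k == 0%N then x 1%N *
      (d * g * l ^+ 2 - 2 * l * d * g + 1 + 2 * l * g - 2 * g + g ^+ 2)
  else if k == 1%N then l ^+ 3 * g - 3 * l ^+ 2 * g - 1 + 2 * g - g ^+ 2
  else if k == 2%N then x 1%N / x 2%N * g *
      (l * g + l ^+ 2 - 2 * l - g + 1 + l * d - d + d * g)
  else x 1%N / x 3%N *
      (l + l ^+ 2 * g - 2 * l * g - 1 + g + d + l * d * g - d * g).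

Definition v2Af (R : realType) (x : nat -> R) (d g l : R) (k : nat) : R :=
  if k == 0%N then x 2%N * d * (1 + l * g - g) * (d + l - 1)
  else if k == 1%N then x 2%N / x 1%N *
      (1 + l * g - g + l * d - d + d * g * l ^+ 2 - 2 * l * d * g + d * g)
  else if k == 2%N then g * (d * l ^+ 3 - 3 * d * l ^+ 2 - 1 + 2 * d - d ^+ 2)
  else x 2%N / x 3%N *
      (2 * l * d * g + d * l ^+ 2 - 2 * l * d - 2 * d * g + g + d ^+ 2 * g).

Definition z2Af (R : realType) (x : nat -> R) (d g l : R) (k : nat) : R :=
  if k == 0%N then x 3%N * d *
      (l * g + l ^+ 2 - 2 * l - g + 1 + l * d - d + d * g)
  else if k == 1%N then x 3%N / x 1%N *
      (g + l - 1 + d * l ^+ 2 - 2 * l * d + d + l * d * g - d * g)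
  else if k == 2%N then x 3%N / x 2%N *
      (2 * l * d + d * g * l ^+ 2 - 2 * l * d * g - 2 * d + 1 + d ^+ 2)
  else d * l ^+ 3 - 3 * d * l ^+ 2 - 1 + 2 * d - d ^+ 2.

Lemma eigE2A (R : realType) (x : nat -> R) d g l : x 0%N = 1 ->
  (forall i, (1 <= i < 4)%N -> 0 < x i) -> 0 < d -> 0 < g -> q2A d g l = 0 ->
  QRmat 4 x d g *m w2A x d g l = l *: w2A x d g l.
Proof.
move=> hx0 hx hd hg hq.
have xn0 : forall i, (1 <= i < 4)%N -> x i != 0 by move=> i /hx /lt0r_neq0.
have d0 : d != 0 by exact: lt0r_neq0.
have g0 : g != 0 by exact: lt0r_neq0.
have hx1 : 0 < x 1%N by apply: hx; nlia.
have x1 : x 1%N != 0 by exact: lt0r_neq0.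
have hx2 : 0 < x 2%N by apply: hx; nlia.
have x2 : x 2%N != 0 by exact: lt0r_neq0.
have hx3 : 0 < x 3%N by apply: hx; nlia.
have x3 : x 3%N != 0 by exact: lt0r_neq0.
apply/matrixP => i j; rewrite ord1 !mxE.
rewrite (eq_bigr (fun k : 'I_4 => QRf x d g i k * w2Af x d g l k)); last by move=> k _; rewrite !mxE.
have xi0 : x i != 0.
  case: i => [[|i] hi] /=; first by rewrite hx0 oner_neq0.
  by apply: xn0; rewrite /=; nlia.
rewrite !big_ord_recr big_ord0 /=.
case: i xi0 => [[|[|[|[|i]]]] hi] /= xi0; rewrite /QRf /w2Af /= ?hx0 .
- apply/eqP; rewrite -subr_eq0; apply/eqP.
  transitivity ((- d * g) * q2A d g l); last by rewrite hq mulr0.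
  rewrite /q2A; field; by rewrite ?d0 ?g0 ?x1 ?x2 ?x3 ?x4 ?xi0 ?xk0 ?hl0.
- apply/eqP; rewrite -subr_eq0; apply/eqP.
  transitivity (0 * q2A d g l); last by rewrite hq mulr0.
  rewrite /q2A; field; by rewrite ?d0 ?g0 ?x1 ?x2 ?x3 ?x4 ?xi0 ?xk0 ?hl0.
- apply/eqP; rewrite -subr_eq0; apply/eqP.
  transitivity (0 * q2A d g l); last by rewrite hq mulr0.
  rewrite /q2A; field; by rewrite ?d0 ?g0 ?x1 ?x2 ?x3 ?x4 ?xi0 ?xk0 ?hl0.
- apply/eqP; rewrite -subr_eq0; apply/eqP.
  transitivity (0 * q2A d g l); last by rewrite hq mulr0.
  rewrite /q2A; field; by rewrite ?d0 ?g0 ?x1 ?x2 ?x3 ?x4 ?xi0 ?xk0 ?hl0.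
- nlia.
Qed.

Definition E2A_0 (R : realType) (N l d g t0 t1 t2 t3 : R) : R := t0 + d * t1 + t2 + t3 - l * t0.
Definition E2A_1 (R : realType) (N l d g t0 t1 t2 t3 : R) : R := d^-1 * t0 + t1 + t2 + t3 - l * t1.
Definition E2A_2 (R : realType) (N l d g t0 t1 t2 t3 : R) : R := t0 + t1 + t2 + g * t3 - l * t2.
Definition E2A_3 (R : realType) (N l d g t0 t1 t2 t3 : R) : R := t0 + t1 + g^-1 * t2 + t3 - l * t3.
Lemma alg2A (R : realType) (N l d g t0 t1 t2 t3 : R) : d != 0 -> g != 0 ->
  E2A_0 N l d g t0 t1 t2 t3 = 0 -> E2A_1 N l d g t0 t1 t2 t3 = 0 -> E2A_2 N l d g t0 t1 t2 t3 = 0 -> E2A_3 N l d g t0 t1 t2 t3 = 0 ->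
  [/\ (q2A d g l) * t0 = 0, (q2A d g l) * t1 = 0, (q2A d g l) * t2 = 0 & (q2A d g l) * t3 = 0].
Proof.
move=> d0 g0 h0 h1 h2 h3; split.
- transitivity (((1%:R) / (g) - 2%:R + g + 3%:R * l^+2 - l^+3) * E2A_0 N l d g t0 t1 t2 t3 + (- (1%:R) / (g) + 2%:R - g - 2%:R * l + 2%:R * l * d - l^+2 * d) * E2A_1 N l d g t0 t1 t2 t3 + ((1%:R) / (g) - 1%:R - (d) / (g) + d - (l) / (g) + 2%:R * l - l * d - l^+2) * E2A_2 N l d g t0 t1 t2 t3 + (- 1%:R + g + d - d * g + 2%:R * l - l * g - l * d - l^+2) * E2A_3 N l d g t0 t1 t2 t3).
    rewrite /q2A /E2A_0 /E2A_1 /E2A_2 /E2A_3; field; by rewrite ?d0 ?g0 ?x1 ?x2 ?x3 ?x4 ?xi0 ?xk0 ?hl0.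
  by rewrite h0 h1 h2 h3 !mulr0 !addr0.
- transitivity ((- (1%:R) / (g) + 2%:R - g + (2%:R * l) / (d) - 2%:R * l - (l^+2) / (d)) * E2A_0 N l d g t0 t1 t2 t3 + ((1%:R) / (g) - 2%:R + g + 3%:R * l^+2 - l^+3) * E2A_1 N l d g t0 t1 t2 t3 + (- (1%:R) / (d * g) + (1%:R) / (d) + (1%:R) / (g) - 1%:R - (l) / (d) - (l) / (g) + 2%:R * l - l^+2) * E2A_2 N l d g t0 t1 t2 t3 + ((1%:R) / (d) - (g) / (d) - 1%:R + g - (l) / (d) + 2%:R * l - l * g - l^+2) * E2A_3 N l d g t0 t1 t2 t3).
    rewrite /q2A /E2A_0 /E2A_1 /E2A_2 /E2A_3; field; by rewrite ?d0 ?g0 ?x1 ?x2 ?x3 ?x4 ?xi0 ?xk0 ?hl0.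
  by rewrite h0 h1 h2 h3 !mulr0 !addr0.
- transitivity (((1%:R) / (d) - (g) / (d) - 1%:R + g - (l) / (d) + 2%:R * l - l * g - l^+2) * E2A_0 N l d g t0 t1 t2 t3 + (- 1%:R + g + d - d * g + 2%:R * l - l * g - l * d - l^+2) * E2A_1 N l d g t0 t1 t2 t3 + ((1%:R) / (d) - 2%:R + d + 3%:R * l^+2 - l^+3) * E2A_2 N l d g t0 t1 t2 t3 + (- (1%:R) / (d) + 2%:R - d - 2%:R * l + 2%:R * l * g - l^+2 * g) * E2A_3 N l d g t0 t1 t2 t3).
    rewrite /q2A /E2A_0 /E2A_1 /E2A_2 /E2A_3; field; by rewrite ?d0 ?g0 ?x1 ?x2 ?x3 ?x4 ?xi0 ?xk0 ?hl0.
  by rewrite h0 h1 h2 h3 !mulr0 !addr0.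
- transitivity ((- (1%:R) / (d * g) + (1%:R) / (d) + (1%:R) / (g) - 1%:R - (l) / (d) - (l) / (g) + 2%:R * l - l^+2) * E2A_0 N l d g t0 t1 t2 t3 + ((1%:R) / (g) - 1%:R - (d) / (g) + d - (l) / (g) + 2%:R * l - l * d - l^+2) * E2A_1 N l d g t0 t1 t2 t3 + (- (1%:R) / (d) + 2%:R - d + (2%:R * l) / (g) - 2%:R * l - (l^+2) / (g)) * E2A_2 N l d g t0 t1 t2 t3 + ((1%:R) / (d) - 2%:R + d + 3%:R * l^+2 - l^+3) * E2A_3 N l d g t0 t1 t2 t3).
    rewrite /q2A /E2A_0 /E2A_1 /E2A_2 /E2A_3; field; by rewrite ?d0 ?g0 ?x1 ?x2 ?x3 ?x4 ?xi0 ?xk0 ?hl0.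
  by rewrite h0 h1 h2 h3 !mulr0 !addr0.
Qed.

Lemma eigR2A (R : realType) (x : nat -> R) d g l (v : 'cV[R]_4) : x 0%N = 1 ->
  (forall i, (1 <= i < 4)%N -> 0 < x i) -> 0 < d -> 0 < g -> l != 0 ->
  QRmat 4 x d g *m v = l *: v -> v != 0 -> q2A d g l = 0.
Proof.
move=> hx0 hx hd hg hl0 hv hv0.
have xn0 : forall i, (i < 4)%N -> x i != 0.
  move=> [|i] hi; first by rewrite hx0 oner_neq0.
  by apply: lt0r_neq0; apply: hx; nlia.
have d0 : d != 0 by exact: lt0r_neq0.
have g0 : g != 0 by exact: lt0r_neq0.
pose vv := fun k : nat => v (inord k) ord0.
pose t := fun k : nat => x k * vv k.
have vvE : forall j : 'I_4, v j ord0 = vv j by move=> j; rewrite /vv inord_val.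
have rowN : forall r, (r < 4)%N -> \sum_(j < 4) QRf x d g r j * vv j = l * vv r.
  move=> r hr; have H : (QRmat 4 x d g *m v) (inord r) ord0 = (l *: v) (inord r) ord0 by rewrite hv.
  rewrite !mxE in H; rewrite (_ : l * vv r = l * v (inord r) ord0) // -H.
  by apply: eq_bigr => j _; rewrite !mxE inordK // vvE.
have E0 : E2A_0 4%:R l d g (t 0) (t 1) (t 2) (t 3) = 0.
  have xr : x 0%N != 0 by apply: xn0; nlia.
  transitivity (x 0%N * ((\sum_(j < 4) QRf x d g 0 j * vv j) - l * vv 0%N)).
    rewrite /E2A_0 !big_ord_recr big_ord0 /= /QRf /t /= ?hx0 ; field; by rewrite ?d0 ?g0 ?x1 ?x2 ?x3 ?x4 ?xi0 ?xk0 ?hl0 ?xr.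
  rewrite ?rowN ?subrr ?mulr0 //; nlia.
have E1 : E2A_1 4%:R l d g (t 0) (t 1) (t 2) (t 3) = 0.
  have xr : x 1%N != 0 by apply: xn0; nlia.
  transitivity (x 1%N * ((\sum_(j < 4) QRf x d g 1 j * vv j) - l * vv 1%N)).
    rewrite /E2A_1 !big_ord_recr big_ord0 /= /QRf /t /= ?hx0 ; field; by rewrite ?d0 ?g0 ?x1 ?x2 ?x3 ?x4 ?xi0 ?xk0 ?hl0 ?xr.
  rewrite ?rowN ?subrr ?mulr0 //; nlia.
have E2 : E2A_2 4%:R l d g (t 0) (t 1) (t 2) (t 3) = 0.
  have xr : x 2%N != 0 by apply: xn0; nlia.
  transitivity (x 2%N * ((\sum_(j < 4) QRf x d g 2 j * vv j) - l * vv 2%N)).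
    rewrite /E2A_2 !big_ord_recr big_ord0 /= /QRf /t /= ?hx0 ; field; by rewrite ?d0 ?g0 ?x1 ?x2 ?x3 ?x4 ?xi0 ?xk0 ?hl0 ?xr.
  rewrite ?rowN ?subrr ?mulr0 //; nlia.
have E3 : E2A_3 4%:R l d g (t 0) (t 1) (t 2) (t 3) = 0.
  have xr : x 3%N != 0 by apply: xn0; nlia.
  transitivity (x 3%N * ((\sum_(j < 4) QRf x d g 3 j * vv j) - l * vv 3%N)).
    rewrite /E2A_3 !big_ord_recr big_ord0 /= /QRf /t /= ?hx0 ; field; by rewrite ?d0 ?g0 ?x1 ?x2 ?x3 ?x4 ?xi0 ?xk0 ?hl0 ?xr.
  rewrite ?rowN ?subrr ?mulr0 //; nlia.
case: (eqVneq (q2A d g l) 0) => // hq.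
have hP : (q2A d g l) != 0 by rewrite ?oppr_eq0 ?mulf_neq0.
have [h0 h1 h2 h3] := @alg2A R 4%:R l d g (t 0) (t 1) (t 2) (t 3) d0 g0 E0 E1 E2 E3.
have tz : forall j, (j < 4)%N -> t j = 0.
  move=> j hj; case: j hj => [|[|[|[|j]]]] hj.
  - by move/eqP: h0; rewrite mulf_eq0 (negbTE hP) => /eqP.
  - by move/eqP: h1; rewrite mulf_eq0 (negbTE hP) => /eqP.
  - by move/eqP: h2; rewrite mulf_eq0 (negbTE hP) => /eqP.
  - by move/eqP: h3; rewrite mulf_eq0 (negbTE hP) => /eqP.
  - nlia.
case/negP: hv0; apply/eqP/matrixP => j k; rewrite ord1 !mxE vvE.
have := tz j (ltn_ord j); rewrite /t => /eqP; rewrite mulf_eq0 (negbTE (xn0 _ (ltn_ord j))) /=.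
by move/eqP.
Qed.

Lemma wpos2A (R : realType) (x : nat -> R) d g l : x 0%N = 1 ->
  (forall i, (1 <= i < 4)%N -> 0 < x i) -> 0 < d -> 0 < g -> 4 < l -> q2A d g l = 0 ->
  forall k, (k < 4)%N -> 0 < w2Af x d g l k.
Proof.
move=> hx0 hx hd hg hl hq.
have d0 : d != 0 by exact: lt0r_neq0.
have g0 : g != 0 by exact: lt0r_neq0.
have hl0' : 0 < l by apply: lt_trans hl; rewrite ltr0n; nlia.
have hl0 : l != 0 by exact: lt0r_neq0.
have ha : 0 < l - 4 by rewrite subr_gt0.
have hx1 : 0 < x 1%N by apply: hx; nlia.
have x1 : x 1%N != 0 by exact: lt0r_neq0.
have hx2 : 0 < x 2%N by apply: hx; nlia.
have x2 : x 2%N != 0 by exact: lt0r_neq0.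
have hx3 : 0 < x 3%N by apply: hx; nlia.
have x3 : x 3%N != 0 by exact: lt0r_neq0.
move=> k hk'; case: k hk' => [|[|[|[|k]]]] hk'; rewrite /w2Af /=.
- apply: (@posq R l (q2A d g l) (d * g) (d * g * l ^+ 3 + (2 * g * (d - 1) ^+ 2 * l + (d - 1) ^+ 2 * (g - 1) ^+ 2 + d * (g - 1) ^+ 2 * l))) => //; [rewrite /q2A; try clear hq; field; by rewrite ?d0 ?g0 ?x1 ?x2 ?x3 ?x4 ?xi0 ?xk0 ?hl0 | apply: posD; [sp | nn]].
- apply: (@pos_eq R (((8%:R * g) / ((x 1%N)) + (6%:R * g * (l - 4)) / ((x 1%N)) + (g * (l - 4)^+2) / ((x 1%N)) + (d) / ((x 1%N)) + (6%:R * d * g) / ((x 1%N)) + (2%:R * d * g * (l - 4)) / ((x 1%N)) + (d * g^+2) / ((x 1%N))))); [first [ring | clear hq; field; by rewrite ?d0 ?g0 ?x1 ?x2 ?x3 ?x4 ?xi0 ?xk0 ?hl0] | sp].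
- apply: (@pos_eq R (((3%:R * g) / ((x 2%N)) + (g * (l - 4)) / ((x 2%N)) + (g^+2) / ((x 2%N)) + (9%:R * d * g) / ((x 2%N)) + (6%:R * d * g * (l - 4)) / ((x 2%N)) + (d * g * (l - 4)^+2) / ((x 2%N)) + (3%:R * d * g^+2) / ((x 2%N)) + (d * g^+2 * (l - 4)) / ((x 2%N))))); [first [ring | clear hq; field; by rewrite ?d0 ?g0 ?x1 ?x2 ?x3 ?x4 ?xi0 ?xk0 ?hl0] | sp].
- apply: (@pos_eq R (((1%:R) / ((x 3%N)) + (3%:R * g) / ((x 3%N)) + (g * (l - 4)) / ((x 3%N)) + (3%:R * d) / ((x 3%N)) + (d * (l - 4)) / ((x 3%N)) + (9%:R * d * g) / ((x 3%N)) + (6%:R * d * g * (l - 4)) / ((x 3%N)) + (d * g * (l - 4)^+2) / ((x 3%N))))); [first [ring | clear hq; field; by rewrite ?d0 ?g0 ?x1 ?x2 ?x3 ?x4 ?xi0 ?xk0 ?hl0] | sp].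
- nlia.
Qed.

Lemma upos2A (R : realType) (x : nat -> R) d g l : x 0%N = 1 ->
  (forall i, (1 <= i < 4)%N -> 0 < x i) -> 0 < d -> 0 < g -> 4 < l -> q2A d g l = 0 ->
  0 < u2Af x d g l 0.
Proof.
move=> hx0 hx hd hg hl hq.
have d0 : d != 0 by exact: lt0r_neq0.
have g0 : g != 0 by exact: lt0r_neq0.
have hl0' : 0 < l by apply: lt_trans hl; rewrite ltr0n; nlia.
have hl0 : l != 0 by exact: lt0r_neq0.
have ha : 0 < l - 4 by rewrite subr_gt0.
have hx1 : 0 < x 1%N by apply: hx; nlia.
have x1 : x 1%N != 0 by exact: lt0r_neq0.
have hx2 : 0 < x 2%N by apply: hx; nlia.
have x2 : x 2%N != 0 by exact: lt0r_neq0.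
have hx3 : 0 < x 3%N by apply: hx; nlia.
have x3 : x 3%N != 0 by exact: lt0r_neq0.
rewrite /u2Af /=.
- apply: (@pos_eq R (((x 1%N) + 6%:R * g * (x 1%N) + 2%:R * g * (x 1%N) * (l - 4) + g^+2 * (x 1%N) + 8%:R * d * g * (x 1%N) + 6%:R * d * g * (x 1%N) * (l - 4) + d * g * (x 1%N) * (l - 4)^+2))); [first [ring | clear hq; field; by rewrite ?d0 ?g0 ?x1 ?x2 ?x3 ?x4 ?xi0 ?xk0 ?hl0] | sp].
Qed.

Lemma prop2Au (R : realType) (x : nat -> R) d g l : x 0%N = 1 ->
  (forall i, (1 <= i < 4)%N -> 0 < x i) -> 0 < d -> 0 < g -> q2A d g l = 0 ->
  0 < u2Af x d g l 0 ->
  w2A x d g l = (w2Af x d g l 0 / u2Af x d g l 0) *: u2A x d g l.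
Proof.
move=> hx0 hx hd hg hq hu.
have d0 : d != 0 by exact: lt0r_neq0.
have g0 : g != 0 by exact: lt0r_neq0.
have hx1 : 0 < x 1%N by apply: hx; nlia.
have x1 : x 1%N != 0 by exact: lt0r_neq0.
have hx2 : 0 < x 2%N by apply: hx; nlia.
have x2 : x 2%N != 0 by exact: lt0r_neq0.
have hx3 : 0 < x 3%N by apply: hx; nlia.
have x3 : x 3%N != 0 by exact: lt0r_neq0.
apply/matrixP => i j; rewrite ord1 !mxE.
apply: prop_lemma; first exact: lt0r_neq0.
case: i => [[|[|[|[|i]]]] hi] /=.
- transitivity (0 * q2A d g l); last by rewrite hq mulr0.
  rewrite /w2Af /u2Af /q2A /= ?hx0; field; by rewrite ?d0 ?g0 ?x1 ?x2 ?x3 ?x4 ?xi0 ?xk0 ?hl0.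
- transitivity ((2%:R * l * d * g^+2 - l^+2 * d * g^+2) * q2A d g l); last by rewrite hq mulr0.
  rewrite /w2Af /u2Af /q2A /= ?hx0; field; by rewrite ?d0 ?g0 ?x1 ?x2 ?x3 ?x4 ?xi0 ?xk0 ?hl0.
- transitivity (((d * g^+2 * (x 1%N)) / ((x 2%N)) - (d * g^+3 * (x 1%N)) / ((x 2%N)) - (l * d * g^+2 * (x 1%N)) / ((x 2%N))) * q2A d g l); last by rewrite hq mulr0.
  rewrite /w2Af /u2Af /q2A /= ?hx0; field; by rewrite ?d0 ?g0 ?x1 ?x2 ?x3 ?x4 ?xi0 ?xk0 ?hl0.
- transitivity ((- (d * g * (x 1%N)) / ((x 3%N)) + (d * g^+2 * (x 1%N)) / ((x 3%N)) - (l * d * g^+2 * (x 1%N)) / ((x 3%N))) * q2A d g l); last by rewrite hq mulr0.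
  rewrite /w2Af /u2Af /q2A /= ?hx0; field; by rewrite ?d0 ?g0 ?x1 ?x2 ?x3 ?x4 ?xi0 ?xk0 ?hl0.
- nlia.
Qed.

Lemma vpos2A (R : realType) (x : nat -> R) d g l : x 0%N = 1 ->
  (forall i, (1 <= i < 4)%N -> 0 < x i) -> 0 < d -> 0 < g -> 4 < l -> q2A d g l = 0 ->
  0 < v2Af x d g l 0.
Proof.
move=> hx0 hx hd hg hl hq.
have d0 : d != 0 by exact: lt0r_neq0.
have g0 : g != 0 by exact: lt0r_neq0.
have hl0' : 0 < l by apply: lt_trans hl; rewrite ltr0n; nlia.
have hl0 : l != 0 by exact: lt0r_neq0.
have ha : 0 < l - 4 by rewrite subr_gt0.
have hx1 : 0 < x 1%N by apply: hx; nlia.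
have x1 : x 1%N != 0 by exact: lt0r_neq0.
have hx2 : 0 < x 2%N by apply: hx; nlia.
have x2 : x 2%N != 0 by exact: lt0r_neq0.
have hx3 : 0 < x 3%N by apply: hx; nlia.
have x3 : x 3%N != 0 by exact: lt0r_neq0.
rewrite /v2Af /=.
- apply: (@pos_eq R ((3%:R * d * (x 2%N) + d * (x 2%N) * (l - 4) + 9%:R * d * g * (x 2%N) + 6%:R * d * g * (x 2%N) * (l - 4) + d * g * (x 2%N) * (l - 4)^+2 + d^+2 * (x 2%N) + 3%:R * d^+2 * g * (x 2%N) + d^+2 * g * (x 2%N) * (l - 4)))); [first [ring | clear hq; field; by rewrite ?d0 ?g0 ?x1 ?x2 ?x3 ?x4 ?xi0 ?xk0 ?hl0] | sp].
Qed.

Lemma prop2Av (R : realType) (x : nat -> R) d g l : x 0%N = 1 ->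
  (forall i, (1 <= i < 4)%N -> 0 < x i) -> 0 < d -> 0 < g -> q2A d g l = 0 ->
  0 < v2Af x d g l 0 ->
  w2A x d g l = (w2Af x d g l 0 / v2Af x d g l 0) *: v2A x d g l.
Proof.
move=> hx0 hx hd hg hq hu.
have d0 : d != 0 by exact: lt0r_neq0.
have g0 : g != 0 by exact: lt0r_neq0.
have hx1 : 0 < x 1%N by apply: hx; nlia.
have x1 : x 1%N != 0 by exact: lt0r_neq0.
have hx2 : 0 < x 2%N by apply: hx; nlia.
have x2 : x 2%N != 0 by exact: lt0r_neq0.
have hx3 : 0 < x 3%N by apply: hx; nlia.
have x3 : x 3%N != 0 by exact: lt0r_neq0.
apply/matrixP => i j; rewrite ord1 !mxE.
apply: prop_lemma; first exact: lt0r_neq0.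
case: i => [[|[|[|[|i]]]] hi] /=.
- transitivity (0 * q2A d g l); last by rewrite hq mulr0.
  rewrite /w2Af /v2Af /q2A /= ?hx0; field; by rewrite ?d0 ?g0 ?x1 ?x2 ?x3 ?x4 ?xi0 ?xk0 ?hl0.
- transitivity ((- (d^+2 * g * (x 2%N)) / ((x 1%N)) + (d^+2 * g^+2 * (x 2%N)) / ((x 1%N)) - (l * d^+2 * g^+2 * (x 2%N)) / ((x 1%N))) * q2A d g l); last by rewrite hq mulr0.
  rewrite /w2Af /v2Af /q2A /= ?hx0; field; by rewrite ?d0 ?g0 ?x1 ?x2 ?x3 ?x4 ?xi0 ?xk0 ?hl0.
- transitivity ((2%:R * l * d^+2 * g^+2 - l^+2 * d^+2 * g^+2) * q2A d g l); last by rewrite hq mulr0.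
  rewrite /w2Af /v2Af /q2A /= ?hx0; field; by rewrite ?d0 ?g0 ?x1 ?x2 ?x3 ?x4 ?xi0 ?xk0 ?hl0.
- transitivity (((d^+2 * g * (x 2%N)) / ((x 3%N)) - (d^+2 * g^+2 * (x 2%N)) / ((x 3%N)) - (l * d^+2 * g * (x 2%N)) / ((x 3%N))) * q2A d g l); last by rewrite hq mulr0.
  rewrite /w2Af /v2Af /q2A /= ?hx0; field; by rewrite ?d0 ?g0 ?x1 ?x2 ?x3 ?x4 ?xi0 ?xk0 ?hl0.
- nlia.
Qed.

Lemma zpos2A (R : realType) (x : nat -> R) d g l : x 0%N = 1 ->
  (forall i, (1 <= i < 4)%N -> 0 < x i) -> 0 < d -> 0 < g -> 4 < l -> q2A d g l = 0 ->
  0 < z2Af x d g l 0.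
Proof.
move=> hx0 hx hd hg hl hq.
have d0 : d != 0 by exact: lt0r_neq0.
have g0 : g != 0 by exact: lt0r_neq0.
have hl0' : 0 < l by apply: lt_trans hl; rewrite ltr0n; nlia.
have hl0 : l != 0 by exact: lt0r_neq0.
have ha : 0 < l - 4 by rewrite subr_gt0.
have hx1 : 0 < x 1%N by apply: hx; nlia.
have x1 : x 1%N != 0 by exact: lt0r_neq0.
have hx2 : 0 < x 2%N by apply: hx; nlia.
have x2 : x 2%N != 0 by exact: lt0r_neq0.
have hx3 : 0 < x 3%N by apply: hx; nlia.
have x3 : x 3%N != 0 by exact: lt0r_neq0.
rewrite /z2Af /=.
- apply: (@pos_eq R ((9%:R * d * (x 3%N) + 6%:R * d * (x 3%N) * (l - 4) + d * (x 3%N) * (l - 4)^+2 + 3%:R * d * g * (x 3%N) + d * g * (x 3%N) * (l - 4) + 3%:R * d^+2 * (x 3%N) + d^+2 * (x 3%N) * (l - 4) + d^+2 * g * (x 3%N)))); [first [ring | clear hq; field; by rewrite ?d0 ?g0 ?x1 ?x2 ?x3 ?x4 ?xi0 ?xk0 ?hl0] | sp].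
Qed.

Lemma prop2Az (R : realType) (x : nat -> R) d g l : x 0%N = 1 ->
  (forall i, (1 <= i < 4)%N -> 0 < x i) -> 0 < d -> 0 < g -> q2A d g l = 0 ->
  0 < z2Af x d g l 0 ->
  w2A x d g l = (w2Af x d g l 0 / z2Af x d g l 0) *: z2A x d g l.
Proof.
move=> hx0 hx hd hg hq hu.
have d0 : d != 0 by exact: lt0r_neq0.
have g0 : g != 0 by exact: lt0r_neq0.
have hx1 : 0 < x 1%N by apply: hx; nlia.
have x1 : x 1%N != 0 by exact: lt0r_neq0.
have hx2 : 0 < x 2%N by apply: hx; nlia.
have x2 : x 2%N != 0 by exact: lt0r_neq0.
have hx3 : 0 < x 3%N by apply: hx; nlia.
have x3 : x 3%N != 0 by exact: lt0r_neq0.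
apply/matrixP => i j; rewrite ord1 !mxE.
apply: prop_lemma; first exact: lt0r_neq0.
case: i => [[|[|[|[|i]]]] hi] /=.
- transitivity (0 * q2A d g l); last by rewrite hq mulr0.
  rewrite /w2Af /z2Af /q2A /= ?hx0; field; by rewrite ?d0 ?g0 ?x1 ?x2 ?x3 ?x4 ?xi0 ?xk0 ?hl0.
- transitivity (((d^+2 * g * (x 3%N)) / ((x 1%N)) - (d^+2 * g^+2 * (x 3%N)) / ((x 1%N)) - (l * d^+2 * g * (x 3%N)) / ((x 1%N))) * q2A d g l); last by rewrite hq mulr0.
  rewrite /w2Af /z2Af /q2A /= ?hx0; field; by rewrite ?d0 ?g0 ?x1 ?x2 ?x3 ?x4 ?xi0 ?xk0 ?hl0.
- transitivity ((- (d^+2 * g * (x 3%N)) / ((x 2%N)) + (d^+2 * g^+2 * (x 3%N)) / ((x 2%N)) - (l * d^+2 * g^+2 * (x 3%N)) / ((x 2%N))) * q2A d g l); last by rewrite hq mulr0.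
  rewrite /w2Af /z2Af /q2A /= ?hx0; field; by rewrite ?d0 ?g0 ?x1 ?x2 ?x3 ?x4 ?xi0 ?xk0 ?hl0.
- transitivity ((2%:R * l * d^+2 * g - l^+2 * d^+2 * g) * q2A d g l); last by rewrite hq mulr0.
  rewrite /w2Af /z2Af /q2A /= ?hx0; field; by rewrite ?d0 ?g0 ?x1 ?x2 ?x3 ?x4 ?xi0 ?xk0 ?hl0.
- nlia.
Qed.


Definition w2Bf (R : realType) (n : nat) (x : nat -> R) (d g l : R) (k : nat) : R :=
  if k == 0%N then d * l *
      (l ^+ 3 * g - ((n%:R) - 1) * l ^+ 2 * g - ((n%:R) - 3) * (g ^+ 2 - 2 * g + 1))
  else if k == 1%N then (x 1%N)^-1 *
      (l ^+ 3 * g - ((n%:R) - 2) * l ^+ 2 * g + ((n%:R) - 2) * d * g * l ^+ 2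
       + (l * d + ((n%:R) - 4) * (d - 1)) * (g ^+ 2 - 2 * g + 1))
  else if k == 2%N then g * l / x 2%N *
      (g + l - 1 + d * l ^+ 2 - 2 * l * d + d + l * d * g - d * g)
  else if k == 3%N then l / x 3%N *
      (1 + l * g - g + l * d - d + d * g * l ^+ 2 - 2 * l * d * g + d * g)
  else (x k)^-1 *
      (g ^+ 2 - 2 * g + l ^+ 2 * g + 1 + l * d - d * g * l ^+ 2 - 2 * l * d * g
       + l * g ^+ 2 * d + l ^+ 3 * d * g - d + 2 * d * g - d * g ^+ 2).

Definition u2Bf (R : realType) (n : nat) (x : nat -> R) (d g l : R) (k : nat) : R :=
  if k == 0%N then x 1%N *
      (l ^+ 3 * d * g - ((n%:R) - 2) * d * g * l ^+ 2 - ((n%:R) - 4) * d * (g - 1) ^+ 2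
       + l + ((n%:R) - 2) * l ^+ 2 * g - 2 * l * g + l * g ^+ 2 + ((n%:R) - 4) * (g - 1) ^+ 2)
  else if k == 1%N then l *
      (l ^+ 3 * g - ((n%:R) - 1) * l ^+ 2 * g - ((n%:R) - 3) * (g - 1) ^+ 2)
  else if k == 2%N then x 1%N / x 2%N * g * l *
      (l * g + l ^+ 2 - 2 * l - g + 1 + d * l - d + d * g)
  else if k == 3%N then x 1%N / x 3%N * l *
      (l + l ^+ 2 * g - 2 * l * g - 1 + g + d + l * d * g - d * g)
  else x 1%N / x k *
      (l * g ^+ 2 - 2 * l * g + l ^+ 3 * g + l - g ^+ 2 + 2 * g - l ^+ 2 * g - 1
       + d - 2 * d * g + d * g ^+ 2 + d * g * l ^+ 2).

Definition v2Bf (R : realType) (n : nat) (x : nat -> R) (d g l : R) (k : nat) : R :=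
  if k == 0%N then x 2%N * d * l * (1 + l * g - g) * (d + l - 1)
  else if k == 1%N then x 2%N / x 1%N * l * (1 + l * g - g) * (1 + d * l - d)
  else if k == 2%N then g * l *
      (l ^+ 3 * d - ((n%:R) - 1) * d * l ^+ 2 - ((n%:R) - 3) * (d - 1) ^+ 2)
  else if k == 3%N then x 2%N / x 3%N *
      (d * l ^+ 3 - ((n%:R) - 2) * d * l ^+ 2 * (1 - g) - 2 * l * d * g
       + 2 * ((n%:R) - 4) * d * (1 - g) + l * g + d ^+ 2 * l * g
       + ((n%:R) - 4) * (- 1 + g - d ^+ 2 + d ^+ 2 * g))
  else x 2%N / x k * (1 + l * g - g) * (d * l ^+ 2 + 1 - 2 * d + d ^+ 2).

Definition z2Bf (R : realType) (n : nat) (x : nat -> R) (d g l : R) (k : nat) : R :=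
  if k == 0%N then x 3%N * d * l *
      (l * g + l ^+ 2 - 2 * l - g + 1 + d * l - d + d * g)
  else if k == 1%N then x 3%N / x 1%N * l * (g + l - 1) * (1 + d * l - d)
  else if k == 2%N then x 3%N / x 2%N *
      (l ^+ 3 * d * g - ((n%:R) - 2) * d * l ^+ 2 * (g - 1) - 2 * d * l
       + 2 * ((n%:R) - 4) * d * (g - 1) + l + d ^+ 2 * l
       + ((n%:R) - 4) * (1 - g + d ^+ 2 - d ^+ 2 * g))
  else if k == 3%N then l *
      (d * l ^+ 3 - ((n%:R) - 1) * d * l ^+ 2 - ((n%:R) - 3) * (d - 1) ^+ 2)
  else x 3%N / x k *
      (d * g * l ^+ 2 + l ^+ 3 * d - d * l ^+ 2 - 2 * d * l - 2 * d * g + 2 * d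
       - 1 + g + l + d ^+ 2 * l - d ^+ 2 + d ^+ 2 * g).

Definition y2Bf (R : realType) (n : nat) (x : nat -> R) (d g l : R) (k : nat) : R :=
  if k == 0%N then x 4%N * d * l * (g ^+ 2 - 2 * g + l ^+ 2 * g + 1) * (d + l - 1)
  else if k == 1%N then x 4%N / x 1%N * l *
      (g ^+ 2 - 2 * g + l ^+ 2 * g + 1) * (1 + d * l - d)
  else if k == 2%N then x 4%N / x 2%N * g * l *
      (d * g * l ^+ 2 + l ^+ 3 * d - d * l ^+ 2 - 2 * d * l - 2 * d * g + 2 * d
       - 1 + g + l + d ^+ 2 * l - d ^+ 2 + d ^+ 2 * g)
  else if k == 3%N then x 4%N / x 3%N * l *
      (d * l ^+ 2 + l ^+ 3 * d * g - d * g * l ^+ 2 - 2 * l * d * g - 2 * d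
       + 2 * d * g - g + 1 + l * g + d ^+ 2 + d ^+ 2 * l * g - d ^+ 2 * g)
  else x 4%N / x k *
      (g ^+ 2 - 2 * g + l ^+ 2 * g + 1) * (d * l ^+ 2 + 1 - 2 * d + d ^+ 2).

Lemma eigE2B (R : realType) n (x : nat -> R) d g l : (5 <= n)%N -> x 0%N = 1 ->
  (forall i, (1 <= i < n)%N -> 0 < x i) -> 0 < d -> 0 < g -> q2B (n%:R) d g l = 0 ->
  QRmat n x d g *m w2B n x d g l = l *: w2B n x d g l.
Proof.
move=> hn hx0 hx hd hg hq.
have xn0 : forall i, (1 <= i < n)%N -> x i != 0 by move=> i /hx /lt0r_neq0.
have d0 : d != 0 by exact: lt0r_neq0.
have g0 : g != 0 by exact: lt0r_neq0.
have hx1 : 0 < x 1%N by apply: hx; nlia.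
have x1 : x 1%N != 0 by exact: lt0r_neq0.
have hx2 : 0 < x 2%N by apply: hx; nlia.
have x2 : x 2%N != 0 by exact: lt0r_neq0.
have hx3 : 0 < x 3%N by apply: hx; nlia.
have x3 : x 3%N != 0 by exact: lt0r_neq0.
have hx4 : 0 < x 4%N by apply: hx; nlia.
have x4 : x 4%N != 0 by exact: lt0r_neq0.
apply/matrixP => i j; rewrite ord1 !mxE.
rewrite (eq_bigr (fun k : 'I_n => QRf x d g i k * w2Bf n x d g l k)); last by move=> k _; rewrite !mxE.
have xi0 : x i != 0.
  case: i => [[|i] hi] /=; first by rewrite hx0 oner_neq0.
  by apply: xn0; rewrite /=; nlia.
have hKn : (4 <= n)%N by nlia.
rewrite (@sum_split R n 4 (fun k => QRf x d g i k * w2Bf n x d g l k) ((g ^+ 2 - 2 * g + l ^+ 2 * g + 1 + l * d - d * g * l ^+ 2 - 2 * l * d * g + l * g ^+ 2 * d + l ^+ 3 * d * g - d + 2 * d * g - d * g ^+ 2) / x i) hKn); last first.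
  move=> k /andP[hk3 hkn]; rewrite /QRf /w2Bf.
  case: k hk3 hkn => [|[|[|[|k]]]] //= _ hkn; rewrite !andbF /=.
  have xk0 : x k.+4 != 0 by apply: xn0; rewrite /=; nlia.
  field; by rewrite ?d0 ?g0 ?x1 ?x2 ?x3 ?x4 ?xi0 ?xk0 ?hl0.
rewrite !big_ord_recr big_ord0 /=.
case: i xi0 => [[|[|[|[|i]]]] hi] /= xi0; rewrite /QRf /w2Bf /= ?hx0 ?natrB //.
- apply/eqP; rewrite -subr_eq0; apply/eqP.
  transitivity ((- d * g) * q2B (n%:R) d g l); last by rewrite hq mulr0.
  rewrite /q2B; field; by rewrite ?d0 ?g0 ?x1 ?x2 ?x3 ?x4 ?xi0 ?xk0 ?hl0.
- apply/eqP; rewrite -subr_eq0; apply/eqP.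
  transitivity (0 * q2B (n%:R) d g l); last by rewrite hq mulr0.
  rewrite /q2B; field; by rewrite ?d0 ?g0 ?x1 ?x2 ?x3 ?x4 ?xi0 ?xk0 ?hl0.
- apply/eqP; rewrite -subr_eq0; apply/eqP.
  transitivity (0 * q2B (n%:R) d g l); last by rewrite hq mulr0.
  rewrite /q2B; field; by rewrite ?d0 ?g0 ?x1 ?x2 ?x3 ?x4 ?xi0 ?xk0 ?hl0.
- apply/eqP; rewrite -subr_eq0; apply/eqP.
  transitivity (0 * q2B (n%:R) d g l); last by rewrite hq mulr0.
  rewrite /q2B; field; by rewrite ?d0 ?g0 ?x1 ?x2 ?x3 ?x4 ?xi0 ?xk0 ?hl0.
- apply/eqP; rewrite -subr_eq0; apply/eqP.
  transitivity (0 * q2B (n%:R) d g l); last by rewrite hq mulr0.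
  rewrite /q2B; field; by rewrite ?d0 ?g0 ?x1 ?x2 ?x3 ?x4 ?xi0 ?xk0 ?hl0.
Qed.

Definition E2B_0 (R : realType) (N l d g t0 t1 t2 t3 e : R) : R := t0 + d * t1 + t2 + t3 + (N - 4) * e - l * t0.
Definition E2B_1 (R : realType) (N l d g t0 t1 t2 t3 e : R) : R := d^-1 * t0 + t1 + t2 + t3 + (N - 4) * e - l * t1.
Definition E2B_2 (R : realType) (N l d g t0 t1 t2 t3 e : R) : R := t0 + t1 + t2 + g * t3 + (N - 4) * e - l * t2.
Definition E2B_3 (R : realType) (N l d g t0 t1 t2 t3 e : R) : R := t0 + t1 + g^-1 * t2 + t3 + (N - 4) * e - l * t3.
Definition E2B_4 (R : realType) (N l d g t0 t1 t2 t3 e : R) : R := t0 + t1 + t2 + t3 + (N - 4) * e - l * e.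
Lemma alg2B (R : realType) (N l d g t0 t1 t2 t3 e : R) : d != 0 -> g != 0 ->
  E2B_0 N l d g t0 t1 t2 t3 e = 0 -> E2B_1 N l d g t0 t1 t2 t3 e = 0 -> E2B_2 N l d g t0 t1 t2 t3 e = 0 -> E2B_3 N l d g t0 t1 t2 t3 e = 0 -> E2B_4 N l d g t0 t1 t2 t3 e = 0 ->
  [/\ (- q2B N d g l) * t0 = 0, (- q2B N d g l) * t1 = 0, (- q2B N d g l) * t2 = 0, (- q2B N d g l) * t3 = 0 & (- q2B N d g l) * e = 0].
Proof.
move=> d0 g0 h0 h1 h2 h3 h4; split.
- transitivity (((3%:R * l) / (g) - (l * N) / (g) - 6%:R * l + 2%:R * l * N + 3%:R * l * g - l * g * N + l^+3 - l^+3 * N + l^+4) * E2B_0 N l d g t0 t1 t2 t3 e + (- (4%:R) / (g) + (N) / (g) + 8%:R - 2%:R * N - 4%:R * g + g * N + (4%:R * d) / (g) - (d * N) / (g) - 8%:R * d + 2%:R * d * N + 4%:R * d * g - d * g * N + (l) / (g) - 2%:R * l + l * g - 2%:R * l^+2 + l^+2 * N + 2%:R * l^+2 * d - l^+2 * d * N + l^+3 * d) * E2B_1 N l d g t0 t1 t2 t3 e + (- (l) / (g) + l + (l * d) / (g) - l * d + (l^+2) / (g) - 2%:R * l^+2 + l^+2 * d + l^+3) * E2B_2 N l d g t0 t1 t2 t3 e + (l - l * g - l * d + l * d * g - 2%:R * l^+2 + l^+2 * g + l^+2 * d + l^+3) * E2B_3 N l d g t0 t1 t2 t3 e + ((4%:R)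 / (g) - (N) / (g) - 8%:R + 2%:R * N + 4%:R * g - g * N - (4%:R * d) / (g) + (d * N) / (g) + 8%:R * d - 2%:R * d * N - 4%:R * d * g + d * g * N - (4%:R * l) / (g) + (l * N) / (g) + 8%:R * l - 2%:R * l * N - 4%:R * l * g + l * g * N + 4%:R * l^+2 - l^+2 * N - 4%:R * l^+2 * d + l^+2 * d * N - 4%:R * l^+3 + l^+3 * N) * E2B_4 N l d g t0 t1 t2 t3 e).
    rewrite /q2B /E2B_0 /E2B_1 /E2B_2 /E2B_3 /E2B_4; field; by rewrite ?d0 ?g0 ?x1 ?x2 ?x3 ?x4 ?xi0 ?xk0 ?hl0.
  by rewrite h0 h1 h2 h3 h4 !mulr0 !addr0.
- transitivity (((4%:R) / (d * g) - (N) / (d * g) - (8%:R) / (d) + (2%:R * N) / (d) + (4%:R * g) / (d) - (g * N) / (d) - (4%:R) / (g) + (N) / (g) + 8%:R - 2%:R * N - 4%:R * g + g * N + (l) / (g) - 2%:R * l + l * g + (2%:R * l^+2) / (d) - (l^+2 * N) / (d) - 2%:R * l^+2 + l^+2 * N + (l^+3) / (d)) * E2B_0 N l d g t0 t1 t2 t3 e + ((3%:R * l) / (g) - (l * N) / (g) - 6%:R * l + 2%:R * l * N + 3%:R * l * g - l * g * N + l^+3 - l^+3 * N + l^+4) * E2B_1 N l d g t0 t1 t2 t3 e + ((l) / (d * g) - (l) / (d) - (l) / (g) + l + (l^+2) / (d) + (l^+2) / (g) - 2%:R * l^+2 + l^+3) * E2B_2 N l d g t0 t1 t2 t3 e + (-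 (l) / (d) + (l * g) / (d) + l - l * g + (l^+2) / (d) - 2%:R * l^+2 + l^+2 * g + l^+3) * E2B_3 N l d g t0 t1 t2 t3 e + (- (4%:R) / (d * g) + (N) / (d * g) + (8%:R) / (d) - (2%:R * N) / (d) - (4%:R * g) / (d) + (g * N) / (d) + (4%:R) / (g) - (N) / (g) - 8%:R + 2%:R * N + 4%:R * g - g * N - (4%:R * l) / (g) + (l * N) / (g) + 8%:R * l - 2%:R * l * N - 4%:R * l * g + l * g * N - (4%:R * l^+2) / (d) + (l^+2 * N) / (d) + 4%:R * l^+2 - l^+2 * N - 4%:R * l^+3 + l^+3 * N) * E2B_4 N l d g t0 t1 t2 t3 e).
    rewrite /q2B /E2B_0 /E2B_1 /E2B_2 /E2B_3 /E2B_4; field; by rewrite ?d0 ?g0 ?x1 ?x2 ?x3 ?x4 ?xi0 ?xk0 ?hl0.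
  by rewrite h0 h1 h2 h3 h4 !mulr0 !addr0.
- transitivity ((- (l) / (d) + (l * g) / (d) + l - l * g + (l^+2) / (d) - 2%:R * l^+2 + l^+2 * g + l^+3) * E2B_0 N l d g t0 t1 t2 t3 e + (l - l * g - l * d + l * d * g - 2%:R * l^+2 + l^+2 * g + l^+2 * d + l^+3) * E2B_1 N l d g t0 t1 t2 t3 e + ((3%:R * l) / (d) - (l * N) / (d) - 6%:R * l + 2%:R * l * N + 3%:R * l * d - l * d * N + l^+3 - l^+3 * N + l^+4) * E2B_2 N l d g t0 t1 t2 t3 e + (- (4%:R) / (d) + (N) / (d) + (4%:R * g) / (d) - (g * N) / (d) + 8%:R - 2%:R * N - 8%:R * g + 2%:R * g * N - 4%:R * d + d * N + 4%:R * d * g - d * g * N + (l) / (d) - 2%:R * l + l * d - 2%:R * l^+2 + l^+2 * N + 2%:R * l^+2 * g - l^+2 * g * N + l^+3 * g) * E2B_3 N l d g t0 t1 t2 t3 e + ((4%:R) / (d) - (N) / (d) - (4%:R * g) / (d) + (g * N) / (d) - 8%:R + 2%:R * N + 8%:R * g - 2%:R * g * N + 4%:R * d - d * N - 4%:R * d * g + d * g * N - (4%:R * l) / (d) + (l * N) / (d) + 8%:R * l - 2%:R * l * N - 4%:R * l * d + l * d * N + 4%:R * l^+2 - l^+2 * N - 4%:R * l^+2 * g + l^+2 * g * N - 4%:R * l^+3 + l^+3 * N) * E2B_4 N l d g t0 t1 t2 t3 e).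
    rewrite /q2B /E2B_0 /E2B_1 /E2B_2 /E2B_3 /E2B_4; field; by rewrite ?d0 ?g0 ?x1 ?x2 ?x3 ?x4 ?xi0 ?xk0 ?hl0.
  by rewrite h0 h1 h2 h3 h4 !mulr0 !addr0.
- transitivity (((l) / (d * g) - (l) / (d) - (l) / (g) + l + (l^+2) / (d) + (l^+2) / (g) - 2%:R * l^+2 + l^+3) * E2B_0 N l d g t0 t1 t2 t3 e + (- (l) / (g) + l + (l * d) / (g) - l * d + (l^+2) / (g) - 2%:R * l^+2 + l^+2 * d + l^+3) * E2B_1 N l d g t0 t1 t2 t3 e + ((4%:R) / (d * g) - (N) / (d * g) - (4%:R) / (d) + (N) / (d) - (8%:R) / (g) + (2%:R * N) / (g) + 8%:R - 2%:R * N + (4%:R * d) / (g) - (d * N) / (g) - 4%:R * d + d * N + (l) / (d) - 2%:R * l + l * d + (2%:R * l^+2) / (g) - (l^+2 * N) / (g) - 2%:R * l^+2 + l^+2 * N + (l^+3) / (g)) * E2B_2 N l d g t0 t1 t2 t3 e + ((3%:R * l) / (d) - (l * N) / (d) - 6%:R * l + 2%:R * l * N + 3%:R * l * d - l * d * N + l^+3 - l^+3 * N + l^+4) * E2B_3 N l d g t0 t1 t2 t3 e + (- (4%:R) / (d * g) + (N) / (d * g) + (4%:R) / (d) - (N) / (d) + (8%:R) / (g) - (2%:R * N) / (g) - 8%:R + 2%:R * N - (4%:R * d) / (g) + (d * N) / (g) + 4%:R * d - d * N - (4%:R * l) / (d) + (l * N) / (d) + 8%:R * l - 2%:R * l * N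 - 4%:R * l * d + l * d * N - (4%:R * l^+2) / (g) + (l^+2 * N) / (g) + 4%:R * l^+2 - l^+2 * N - 4%:R * l^+3 + l^+3 * N) * E2B_4 N l d g t0 t1 t2 t3 e).
    rewrite /q2B /E2B_0 /E2B_1 /E2B_2 /E2B_3 /E2B_4; field; by rewrite ?d0 ?g0 ?x1 ?x2 ?x3 ?x4 ?xi0 ?xk0 ?hl0.
  by rewrite h0 h1 h2 h3 h4 !mulr0 !addr0.
- transitivity (((1%:R) / (d * g) - (2%:R) / (d) + (g) / (d) - (1%:R) / (g) + 2%:R - g + (l) / (g) - 2%:R * l + l * g + (l^+2) / (d) - l^+2 + l^+3) * E2B_0 N l d g t0 t1 t2 t3 e + (- (1%:R) / (g) + 2%:R - g + (d) / (g) - 2%:R * d + d * g + (l) / (g) - 2%:R * l + l * g - l^+2 + l^+2 * d + l^+3) * E2B_1 N l d g t0 t1 t2 t3 e + ((1%:R) / (d * g) - (1%:R) / (d) - (2%:R) / (g) + 2%:R + (d) / (g) - d + (l) / (d) - 2%:R * l + l * d + (l^+2) / (g) - l^+2 + l^+3) * E2B_2 N l d g t0 t1 t2 t3 e + (- (1%:R) / (d) + (g) / (d) + 2%:R - 2%:R * g - d + d * g + (l) / (d) - 2%:R * l + l * d - l^+2 + l^+2 * g + l^+3) * E2B_3 N l d g t0 t1 t2 t3 e + (- (1%:R) / (d * g) + (2%:R) / (d) - (g) / (d) + (2%:R) / (g) - 4%:R + 2%:R * g - (d) / (g) + 2%:R * d - d * g - (2%:R * l) / (d) - (2%:R * l)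 / (g) + 8%:R * l - 2%:R * l * g - 2%:R * l * d - 4%:R * l^+3 + l^+4) * E2B_4 N l d g t0 t1 t2 t3 e).
    rewrite /q2B /E2B_0 /E2B_1 /E2B_2 /E2B_3 /E2B_4; field; by rewrite ?d0 ?g0 ?x1 ?x2 ?x3 ?x4 ?xi0 ?xk0 ?hl0.
  by rewrite h0 h1 h2 h3 h4 !mulr0 !addr0.
Qed.

Lemma eigR2B (R : realType) n (x : nat -> R) d g l (v : 'cV[R]_n) : (5 <= n)%N -> x 0%N = 1 ->
  (forall i, (1 <= i < n)%N -> 0 < x i) -> 0 < d -> 0 < g -> l != 0 ->
  QRmat n x d g *m v = l *: v -> v != 0 -> q2B n%:R d g l = 0.
Proof.
move=> hn; case: n hn v => [//|n] hn v hx0 hx hd hg hl0 hv hv0.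
have xn0 : forall i, (i < n.+1)%N -> x i != 0.
  move=> [|i] hi; first by rewrite hx0 oner_neq0.
  by apply: lt0r_neq0; apply: hx; nlia.
have hK : (4 <= n.+1)%N by nlia.
have d0 : d != 0 by exact: lt0r_neq0.
have g0 : g != 0 by exact: lt0r_neq0.
pose vv := fun k : nat => v (inord k) ord0.
pose t := fun k : nat => x k * vv k.
have vvE : forall j : 'I_n.+1, v j ord0 = vv j by move=> j; rewrite /vv inord_val.
have rowN : forall r, (r < n.+1)%N -> \sum_(j < n.+1) QRf x d g r j * vv j = l * vv r.
  move=> r hr; have H : (QRmat n.+1 x d g *m v) (inord r) ord0 = (l *: v) (inord r) ord0 by rewrite hv.
  rewrite !mxE in H; rewrite (_ : l * vv r = l * v (inord r) ord0) // -H.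
  by apply: eq_bigr => j _; rewrite !mxE inordK // vvE.
have MFgen : forall r j, (4 <= j)%N -> QRf x d g r j = x j / x r.
  by move=> r [|[|[|[|j]]]] // _; rewrite /QRf /= !andbF.
have MFrow : forall r j, (4 <= r)%N -> QRf x d g r j = x j / x r.
  by move=> [|[|[|[|r]]]] j // _; rewrite /QRf /=.
pose S := \sum_(j < n.+1) t j.
pose e := S / l.
have gen : forall r, (4 <= r < n.+1)%N -> t r = e.
  move=> r /andP[h1 h2]; have := rowN r h2.
  rewrite (eq_bigr (fun j : 'I_n.+1 => t j / x r)); last by move=> j _; rewrite MFrow // mulrAC.
  rewrite -mulr_suml -/S => H.
  have xr := xn0 r h2.
  rewrite /e /t -(mulKf hl0 (vv r)) -H; field; by rewrite xr hl0.
have lowrow : forall r, (r < n.+1)%N -> \sum_(j < n.+1) QRf x d g r j * vv j =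
    \sum_(j < 4) QRf x d g r j * vv j + (n.+1 - 4)%:R * (e / x r).
  move=> r hr; rewrite (@sum_split R n.+1 4 (fun j => QRf x d g r j * vv j) (e / x r) hK) // => j /andP[h1 h2].
  have hj : (4 <= j < n.+1)%N by rewrite h1 h2.
  by rewrite MFgen // mulrAC -/(t j) gen.
have SE : S = \sum_(j < 4) t j + (n.+1 - 4)%:R * e.
  by rewrite /S (@sum_split R n.+1 4 t e hK) // => j hj; apply: gen.
have E0 : E2B_0 n.+1%:R l d g (t 0) (t 1) (t 2) (t 3) e = 0.
  have xr : x 0%N != 0 by apply: xn0; nlia.
  transitivity (x 0%N * ((\sum_(j < 4) QRf x d g 0 j * vv j + (n.+1 - 4)%:R * (e / x 0%N)) - l * vv 0%N)).
    rewrite /E2B_0 !big_ord_recr big_ord0 /= /QRf /t /= ?hx0 ?natrB //; field; by rewrite ?d0 ?g0 ?x1 ?x2 ?x3 ?x4 ?xi0 ?xk0 ?hl0 ?xr.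
  rewrite -lowrow ?rowN ?subrr ?mulr0 //; nlia.
have E1 : E2B_1 n.+1%:R l d g (t 0) (t 1) (t 2) (t 3) e = 0.
  have xr : x 1%N != 0 by apply: xn0; nlia.
  transitivity (x 1%N * ((\sum_(j < 4) QRf x d g 1 j * vv j + (n.+1 - 4)%:R * (e / x 1%N)) - l * vv 1%N)).
    rewrite /E2B_1 !big_ord_recr big_ord0 /= /QRf /t /= ?hx0 ?natrB //; field; by rewrite ?d0 ?g0 ?x1 ?x2 ?x3 ?x4 ?xi0 ?xk0 ?hl0 ?xr.
  rewrite -lowrow ?rowN ?subrr ?mulr0 //; nlia.
have E2 : E2B_2 n.+1%:R l d g (t 0) (t 1) (t 2) (t 3) e = 0.
  have xr : x 2%N != 0 by apply: xn0; nlia.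
  transitivity (x 2%N * ((\sum_(j < 4) QRf x d g 2 j * vv j + (n.+1 - 4)%:R * (e / x 2%N)) - l * vv 2%N)).
    rewrite /E2B_2 !big_ord_recr big_ord0 /= /QRf /t /= ?hx0 ?natrB //; field; by rewrite ?d0 ?g0 ?x1 ?x2 ?x3 ?x4 ?xi0 ?xk0 ?hl0 ?xr.
  rewrite -lowrow ?rowN ?subrr ?mulr0 //; nlia.
have E3 : E2B_3 n.+1%:R l d g (t 0) (t 1) (t 2) (t 3) e = 0.
  have xr : x 3%N != 0 by apply: xn0; nlia.
  transitivity (x 3%N * ((\sum_(j < 4) QRf x d g 3 j * vv j + (n.+1 - 4)%:R * (e / x 3%N)) - l * vv 3%N)).
    rewrite /E2B_3 !big_ord_recr big_ord0 /= /QRf /t /= ?hx0 ?natrB //; field; by rewrite ?d0 ?g0 ?x1 ?x2 ?x3 ?x4 ?xi0 ?xk0 ?hl0 ?xr.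
  rewrite -lowrow ?rowN ?subrr ?mulr0 //; nlia.
have E4 : E2B_4 n.+1%:R l d g (t 0) (t 1) (t 2) (t 3) e = 0.
  transitivity (S - l * e).
    rewrite SE /E2B_4 !big_ord_recr big_ord0 /= natrB //; ring.
  by rewrite /e; field; rewrite hl0.
case: (eqVneq (q2B n.+1%:R d g l) 0) => // hq.
have hP : (- q2B n.+1%:R d g l) != 0 by rewrite ?oppr_eq0 ?mulf_neq0.
have [h0 h1 h2 h3 h4] := @alg2B R n.+1%:R l d g (t 0) (t 1) (t 2) (t 3) e d0 g0 E0 E1 E2 E3 E4.
have tz : forall j, (j < n.+1)%N -> t j = 0.
  move=> j hj; case: j hj => [|[|[|[|j]]]] hj.
  - by move/eqP: h0; rewrite mulf_eq0 (negbTE hP) => /eqP.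
  - by move/eqP: h1; rewrite mulf_eq0 (negbTE hP) => /eqP.
  - by move/eqP: h2; rewrite mulf_eq0 (negbTE hP) => /eqP.
  - by move/eqP: h3; rewrite mulf_eq0 (negbTE hP) => /eqP.
  - rewrite gen; last by rewrite hj.
    by move/eqP: h4; rewrite mulf_eq0 (negbTE hP) => /eqP.
case/negP: hv0; apply/eqP/matrixP => j k; rewrite ord1 !mxE vvE.
have := tz j (ltn_ord j); rewrite /t => /eqP; rewrite mulf_eq0 (negbTE (xn0 _ (ltn_ord j))) /=.
by move/eqP.
Qed.

Lemma wpos2B (R : realType) n (x : nat -> R) d g l : (5 <= n)%N -> x 0%N = 1 ->
  (forall i, (1 <= i < n)%N -> 0 < x i) -> 0 < d -> 0 < g -> n%:R < l -> q2B (n%:R) d g l = 0 ->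
  forall k, (k < n)%N -> 0 < w2Bf n x d g l k.
Proof.
move=> hn hx0 hx hd hg hl hq.
have d0 : d != 0 by exact: lt0r_neq0.
have g0 : g != 0 by exact: lt0r_neq0.
have hl0' : 0 < l by apply: lt_trans hl; rewrite ltr0n; nlia.
have hl0 : l != 0 by exact: lt0r_neq0.
have ha : 0 < l - n%:R by rewrite subr_gt0.
have hk : 0 <= n%:R - 5 :> R by rewrite subr_ge0 (ler_nat R 5 n).
have hk2 : 0 <= n%:R - 2 :> R by rewrite subr_ge0 (ler_nat R 2 n); nlia.
have hk4 : 0 <= n%:R - 4 :> R by rewrite subr_ge0 (ler_nat R 4 n); nlia.
have hx1 : 0 < x 1%N by apply: hx; nlia.
have x1 : x 1%N != 0 by exact: lt0r_neq0.
have hx2 : 0 < x 2%N by apply: hx; nlia.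
have x2 : x 2%N != 0 by exact: lt0r_neq0.
have hx3 : 0 < x 3%N by apply: hx; nlia.
have x3 : x 3%N != 0 by exact: lt0r_neq0.
have hx4 : 0 < x 4%N by apply: hx; nlia.
have x4 : x 4%N != 0 by exact: lt0r_neq0.
move=> k hk'; case: k hk' => [|[|[|[|k]]]] hk'; rewrite /w2Bf /=.
- apply: (@posq R (l ^+ 2) (q2B n%:R d g l) (d * g * l) (d * g * l ^+ 5 + (g * (n%:R - 2) * (d - 1) ^+ 2 * l ^+ 3 + d * (g - 1) ^+ 2 * l ^+ 3 + (d - 1) ^+ 2 * (g - 1) ^+ 2 * l ^+ 2 + (n%:R - 4) * (d - 1) ^+ 2 * (g - 1) ^+ 2 * l))) => //; [sp | rewrite /q2B; try clear hq; field; by rewrite ?d0 ?g0 ?x1 ?x2 ?x3 ?x4 ?xi0 ?xk0 ?hl0 | apply: posD; [sp | nn]].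
- apply: (@posq R (x 1%N * l ^+ 2) (q2B n%:R d g l) g (g * l ^+ 4 + (g * (n%:R - 2) * (d - 1) ^+ 2 / d * l ^+ 2 + (g - 1) ^+ 2 * l ^+ 2 + (d - 1) ^+ 2 * (g - 1) ^+ 2 / d * l + (n%:R - 4) * (d - 1) ^+ 2 * (g - 1) ^+ 2 / d + l ^+ 2 * (g * l ^+ 2 + (n%:R - 2) * d * g * l ^+ 2 + l * d * (g - 1) ^+ 2 + ((n%:R - 4) * d + 1) * (g - 1) ^+ 2)))) => //; [sp | rewrite /q2B; try clear hq; field; by rewrite ?d0 ?g0 ?x1 ?x2 ?x3 ?x4 ?xi0 ?xk0 ?hl0 | apply: posD; [sp | nn]].
- apply: (@pos_eq R (((20%:R * g) / ((x 2%N)) + (9%:R * g * (l - n%:R)) / ((x 2%N)) + (g * (l - n%:R)^+2) / ((x 2%N)) + (5%:R * g^+2) / ((x 2%N)) + (g^+2 * (l - n%:R)) / ((x 2%N)) + (80%:R * d * g) / ((x 2%N)) + (56%:R * d * g * (l - n%:R)) / ((x 2%N)) + (13%:R * d * g * (l - n%:R)^+2) / ((x 2%N)) + (d * g * (l - n%:R)^+3) / ((x 2%N)) + (20%:R * d * g^+2) / ((x 2%N)) + (9%:R * d * g^+2 * (l - n%:R)) / ((x 2%N)) + (d * g^+2 * (l - n%:R)^+2) / ((x 2%N))) + ((9%:R * g * (n%:R - 5)) / ((x 2%N)) + (g * (n%:R - 5)^+2) / ((x 2%N)) + (2%:R * g * (l - n%:R) * (n%:R - 5)) / ((x 2%N))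 + (g^+2 * (n%:R - 5)) / ((x 2%N)) + (56%:R * d * g * (n%:R - 5)) / ((x 2%N)) + (13%:R * d * g * (n%:R - 5)^+2) / ((x 2%N)) + (d * g * (n%:R - 5)^+3) / ((x 2%N)) + (26%:R * d * g * (l - n%:R) * (n%:R - 5)) / ((x 2%N)) + (3%:R * d * g * (l - n%:R) * (n%:R - 5)^+2) / ((x 2%N)) + (3%:R * d * g * (l - n%:R)^+2 * (n%:R - 5)) / ((x 2%N)) + (9%:R * d * g^+2 * (n%:R - 5)) / ((x 2%N)) + (d * g^+2 * (n%:R - 5)^+2) / ((x 2%N)) + (2%:R * d * g^+2 * (l - n%:R) * (n%:R - 5)) / ((x 2%N))))); [first [ring | clear hq; field; by rewrite ?d0 ?g0 ?x1 ?x2 ?x3 ?x4 ?xi0 ?xk0 ?hl0] | apply: posD; [sp | nn]].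
- apply: (@pos_eq R (((5%:R) / ((x 3%N)) + ((l - n%:R)) / ((x 3%N)) + (20%:R * g) / ((x 3%N)) + (9%:R * g * (l - n%:R)) / ((x 3%N)) + (g * (l - n%:R)^+2) / ((x 3%N)) + (20%:R * d) / ((x 3%N)) + (9%:R * d * (l - n%:R)) / ((x 3%N)) + (d * (l - n%:R)^+2) / ((x 3%N)) + (80%:R * d * g) / ((x 3%N)) + (56%:R * d * g * (l - n%:R)) / ((x 3%N)) + (13%:R * d * g * (l - n%:R)^+2) / ((x 3%N)) + (d * g * (l - n%:R)^+3) / ((x 3%N))) + (((n%:R - 5)) / ((x 3%N)) + (9%:R * g * (n%:R - 5)) / ((x 3%N)) + (g * (n%:R - 5)^+2) / ((x 3%N)) + (2%:R * g * (l - n%:R) * (n%:R - 5)) / ((x 3%N)) + (9%:R * d * (n%:R - 5)) / ((x 3%N)) + (d * (n%:R - 5)^+2) / ((x 3%N)) + (2%:R * d * (l - n%:R) * (n%:R - 5)) / ((x 3%N)) + (56%:R * d * g * (n%:R - 5)) / ((x 3%N)) + (13%:R * d * g * (n%:R - 5)^+2) / ((x 3%N)) + (d * g * (n%:R - 5)^+3) / ((x 3%N)) + (26%:R * d * g * (l - n%:R) * (n%:R - 5)) / ((x 3%N)) + (3%:R * d * g * (l - n%:R) * (n%:R - 5)^+2) / ((x 3%N)) + (3%:R * d * g * (l - n%:R)^+2 * (n%:R - 5)) / ((x 3%N))))); [first [ring | clear hq; field; by rewrite ?d0 ?g0 ?x1 ?x2 ?x3 ?x4 ?xi0 ?xk0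 ?hl0] | apply: posD; [sp | nn]].
- have hxk : 0 < x k.+4 by apply: hx; nlia.
  have xk0 : x k.+4 != 0 by exact: lt0r_neq0.
  apply: (@pos_eq R (((1%:R) / ((x k.+4)) + (23%:R * g) / ((x k.+4)) + (10%:R * g * (l - n%:R)) / ((x k.+4)) + (g * (l - n%:R)^+2) / ((x k.+4)) + (g^+2) / ((x k.+4)) + (4%:R * d) / ((x k.+4)) + (d * (l - n%:R)) / ((x k.+4)) + (92%:R * d * g) / ((x k.+4)) + (63%:R * d * g * (l - n%:R)) / ((x k.+4)) + (14%:R * d * g * (l - n%:R)^+2) / ((x k.+4)) + (d * g * (l - n%:R)^+3) / ((x k.+4)) + (4%:R * d * g^+2) / ((x k.+4)) + (d * g^+2 * (l - n%:R)) / ((x k.+4))) + ((10%:R * g * (n%:R - 5)) / ((x k.+4)) + (g * (n%:R - 5)^+2) / ((x k.+4)) + (2%:R * g * (l - n%:R) * (n%:R - 5)) / ((x k.+4)) + (d * (n%:R - 5)) / ((x k.+4)) + (63%:R * d * g * (n%:R - 5)) / ((x k.+4)) + (14%:R * d * g * (n%:R - 5)^+2) / ((x k.+4)) + (d * g * (n%:R - 5)^+3) / ((x k.+4)) + (28%:R * d * g * (l - n%:R) * (n%:R - 5)) / ((x k.+4)) + (3%:R * d * g * (l - n%:R) * (n%:R - 5)^+2) / ((x k.+4)) + (3%:R * d * g * (l - n%:R)^+2 * (n%:R - 5)) / ((x k.+4)) + (d * g^+2 * (n%:R - 5)) / ((x k.+4))))); [first [ring | clear hq; field; by rewrite ?d0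 ?g0 ?x1 ?x2 ?x3 ?x4 ?xi0 ?xk0 ?hl0] | apply: posD; [sp | nn]].
Qed.

Lemma upos2B (R : realType) n (x : nat -> R) d g l : (5 <= n)%N -> x 0%N = 1 ->
  (forall i, (1 <= i < n)%N -> 0 < x i) -> 0 < d -> 0 < g -> n%:R < l -> q2B (n%:R) d g l = 0 ->
  0 < u2Bf n x d g l 2.
Proof.
move=> hn hx0 hx hd hg hl hq.
have d0 : d != 0 by exact: lt0r_neq0.
have g0 : g != 0 by exact: lt0r_neq0.
have hl0' : 0 < l by apply: lt_trans hl; rewrite ltr0n; nlia.
have hl0 : l != 0 by exact: lt0r_neq0.
have ha : 0 < l - n%:R by rewrite subr_gt0.
have hk : 0 <= n%:R - 5 :> R by rewrite subr_ge0 (ler_nat R 5 n).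
have hk2 : 0 <= n%:R - 2 :> R by rewrite subr_ge0 (ler_nat R 2 n); nlia.
have hk4 : 0 <= n%:R - 4 :> R by rewrite subr_ge0 (ler_nat R 4 n); nlia.
have hx1 : 0 < x 1%N by apply: hx; nlia.
have x1 : x 1%N != 0 by exact: lt0r_neq0.
have hx2 : 0 < x 2%N by apply: hx; nlia.
have x2 : x 2%N != 0 by exact: lt0r_neq0.
have hx3 : 0 < x 3%N by apply: hx; nlia.
have x3 : x 3%N != 0 by exact: lt0r_neq0.
have hx4 : 0 < x 4%N by apply: hx; nlia.
have x4 : x 4%N != 0 by exact: lt0r_neq0.
rewrite /u2Bf /=.
- apply: (@pos_eq R (((80%:R * g * (x 1%N)) / ((x 2%N)) + (56%:R * g * (x 1%N) * (l - n%:R)) / ((x 2%N)) + (13%:R * g * (x 1%N) * (l - n%:R)^+2) / ((x 2%N)) + (g * (x 1%N) * (l - n%:R)^+3) / ((x 2%N)) + (20%:R * g^+2 * (x 1%N)) / ((x 2%N)) + (9%:R * g^+2 * (x 1%N) * (l - n%:R)) / ((x 2%N)) + (g^+2 * (x 1%N) * (l - n%:R)^+2) / ((x 2%N)) + (20%:R * d * g * (x 1%N)) / ((x 2%N)) + (9%:R * d * g * (x 1%N) * (l - n%:R)) / ((x 2%N)) + (d * g * (x 1%N) * (l - n%:R)^+2) / ((x 2%N)) + (5%:R * d * g^+2 * (x 1%N)) / ((x 2%N)) + (d * g^+2 * (x 1%N) * (l - n%:R)) / ((x 2%N))) + ((56%:R * g * (x 1%N) * (n%:R - 5)) / ((x 2%N))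 + (13%:R * g * (x 1%N) * (n%:R - 5)^+2) / ((x 2%N)) + (g * (x 1%N) * (n%:R - 5)^+3) / ((x 2%N)) + (26%:R * g * (x 1%N) * (l - n%:R) * (n%:R - 5)) / ((x 2%N)) + (3%:R * g * (x 1%N) * (l - n%:R) * (n%:R - 5)^+2) / ((x 2%N)) + (3%:R * g * (x 1%N) * (l - n%:R)^+2 * (n%:R - 5)) / ((x 2%N)) + (9%:R * g^+2 * (x 1%N) * (n%:R - 5)) / ((x 2%N)) + (g^+2 * (x 1%N) * (n%:R - 5)^+2) / ((x 2%N)) + (2%:R * g^+2 * (x 1%N) * (l - n%:R) * (n%:R - 5)) / ((x 2%N)) + (9%:R * d * g * (x 1%N) * (n%:R - 5)) / ((x 2%N)) + (d * g * (x 1%N) * (n%:R - 5)^+2) / ((x 2%N)) + (2%:R * d * g * (x 1%N) * (l - n%:R) * (n%:R - 5)) / ((x 2%N)) + (d * g^+2 * (x 1%N) * (n%:R - 5)) / ((x 2%N))))); [first [ring | clear hq; field; by rewrite ?d0 ?g0 ?x1 ?x2 ?x3 ?x4 ?xi0 ?xk0 ?hl0] | apply: posD; [sp | nn]].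
Qed.

Lemma prop2Bu (R : realType) n (x : nat -> R) d g l : (5 <= n)%N -> x 0%N = 1 ->
  (forall i, (1 <= i < n)%N -> 0 < x i) -> 0 < d -> 0 < g -> q2B (n%:R) d g l = 0 ->
  0 < u2Bf n x d g l 2 ->
  w2B n x d g l = (w2Bf n x d g l 2 / u2Bf n x d g l 2) *: u2B n x d g l.
Proof.
move=> hn hx0 hx hd hg hq hu.
have d0 : d != 0 by exact: lt0r_neq0.
have g0 : g != 0 by exact: lt0r_neq0.
have hx1 : 0 < x 1%N by apply: hx; nlia.
have x1 : x 1%N != 0 by exact: lt0r_neq0.
have hx2 : 0 < x 2%N by apply: hx; nlia.
have x2 : x 2%N != 0 by exact: lt0r_neq0.
have hx3 : 0 < x 3%N by apply: hx; nlia.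
have x3 : x 3%N != 0 by exact: lt0r_neq0.
have hx4 : 0 < x 4%N by apply: hx; nlia.
have x4 : x 4%N != 0 by exact: lt0r_neq0.
apply/matrixP => i j; rewrite ord1 !mxE.
apply: prop_lemma; first exact: lt0r_neq0.
case: i => [[|[|[|[|i]]]] hi] /=.
- transitivity ((- (l * d * g^+2 * (x 1%N)) / ((x 2%N)) + (l * d * g^+3 * (x 1%N)) / ((x 2%N)) + (l^+2 * d * g^+2 * (x 1%N)) / ((x 2%N))) * q2B (n%:R) d g l); last by rewrite hq mulr0.
  rewrite /w2Bf /u2Bf /q2B /= ?hx0; field; by rewrite ?d0 ?g0 ?x1 ?x2 ?x3 ?x4 ?xi0 ?xk0 ?hl0.
- transitivity (((l * d * g^+2) / ((x 2%N)) - (l * d * g^+3) / ((x 2%N)) - (l^+2 * d * g^+2) / ((x 2%N))) * q2B (n%:R) d g l); last by rewrite hq mulr0.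
  rewrite /w2Bf /u2Bf /q2B /= ?hx0; field; by rewrite ?d0 ?g0 ?x1 ?x2 ?x3 ?x4 ?xi0 ?xk0 ?hl0.
- transitivity (0 * q2B (n%:R) d g l); last by rewrite hq mulr0.
  rewrite /w2Bf /u2Bf /q2B /= ?hx0; field; by rewrite ?d0 ?g0 ?x1 ?x2 ?x3 ?x4 ?xi0 ?xk0 ?hl0.
- transitivity (0 * q2B (n%:R) d g l); last by rewrite hq mulr0.
  rewrite /w2Bf /u2Bf /q2B /= ?hx0; field; by rewrite ?d0 ?g0 ?x1 ?x2 ?x3 ?x4 ?xi0 ?xk0 ?hl0.
- have xk0 : x i.+4 != 0 by apply: lt0r_neq0; apply: hx; nlia.
  transitivity (0 * q2B (n%:R) d g l); last by rewrite hq mulr0.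
  rewrite /w2Bf /u2Bf /q2B /= ?hx0; field; by rewrite ?d0 ?g0 ?x1 ?x2 ?x3 ?x4 ?xi0 ?xk0 ?hl0.
Qed.

Lemma vpos2B (R : realType) n (x : nat -> R) d g l : (5 <= n)%N -> x 0%N = 1 ->
  (forall i, (1 <= i < n)%N -> 0 < x i) -> 0 < d -> 0 < g -> n%:R < l -> q2B (n%:R) d g l = 0 ->
  0 < v2Bf n x d g l 0.
Proof.
move=> hn hx0 hx hd hg hl hq.
have d0 : d != 0 by exact: lt0r_neq0.
have g0 : g != 0 by exact: lt0r_neq0.
have hl0' : 0 < l by apply: lt_trans hl; rewrite ltr0n; nlia.
have hl0 : l != 0 by exact: lt0r_neq0.
have ha : 0 < l - n%:R by rewrite subr_gt0.
have hk : 0 <= n%:R - 5 :> R by rewrite subr_ge0 (ler_nat R 5 n).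
have hk2 : 0 <= n%:R - 2 :> R by rewrite subr_ge0 (ler_nat R 2 n); nlia.
have hk4 : 0 <= n%:R - 4 :> R by rewrite subr_ge0 (ler_nat R 4 n); nlia.
have hx1 : 0 < x 1%N by apply: hx; nlia.
have x1 : x 1%N != 0 by exact: lt0r_neq0.
have hx2 : 0 < x 2%N by apply: hx; nlia.
have x2 : x 2%N != 0 by exact: lt0r_neq0.
have hx3 : 0 < x 3%N by apply: hx; nlia.
have x3 : x 3%N != 0 by exact: lt0r_neq0.
have hx4 : 0 < x 4%N by apply: hx; nlia.
have x4 : x 4%N != 0 by exact: lt0r_neq0.
rewrite /v2Bf /=.
- apply: (@pos_eq R ((20%:R * d * (x 2%N) + 9%:R * d * (x 2%N) * (l - n%:R) + d * (x 2%N) * (l - n%:R)^+2 + 80%:R * d * g * (x 2%N) + 56%:R * d * g * (x 2%N) * (l - n%:R) + 13%:R * d * g * (x 2%N) * (l - n%:R)^+2 + d * g * (x 2%N) * (l - n%:R)^+3 + 5%:R * d^+2 * (x 2%N) + d^+2 * (x 2%N) * (l - n%:R) + 20%:R * d^+2 * g * (x 2%N) + 9%:R * d^+2 * g * (x 2%N) * (l - n%:R) + d^+2 * g * (x 2%N) * (l - n%:R)^+2) + (9%:R * d * (x 2%N) * (n%:R - 5) + d * (x 2%N) * (n%:R - 5)^+2 + 2%:R * d * (x 2%N) * (l - n%:R) * (n%:R - 5) + 56%:R * d * g * (x 2%N) * (n%:R - 5) + 13%:R * d * g * (x 2%N) * (n%:R - 5)^+2 + d * g * (x 2%N) * (n%:R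 - 5)^+3 + 26%:R * d * g * (x 2%N) * (l - n%:R) * (n%:R - 5) + 3%:R * d * g * (x 2%N) * (l - n%:R) * (n%:R - 5)^+2 + 3%:R * d * g * (x 2%N) * (l - n%:R)^+2 * (n%:R - 5) + d^+2 * (x 2%N) * (n%:R - 5) + 9%:R * d^+2 * g * (x 2%N) * (n%:R - 5) + d^+2 * g * (x 2%N) * (n%:R - 5)^+2 + 2%:R * d^+2 * g * (x 2%N) * (l - n%:R) * (n%:R - 5)))); [first [ring | clear hq; field; by rewrite ?d0 ?g0 ?x1 ?x2 ?x3 ?x4 ?xi0 ?xk0 ?hl0] | apply: posD; [sp | nn]].
Qed.

Lemma prop2Bv (R : realType) n (x : nat -> R) d g l : (5 <= n)%N -> x 0%N = 1 ->
  (forall i, (1 <= i < n)%N -> 0 < x i) -> 0 < d -> 0 < g -> q2B (n%:R) d g l = 0 ->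
  0 < v2Bf n x d g l 0 ->
  w2B n x d g l = (w2Bf n x d g l 0 / v2Bf n x d g l 0) *: v2B n x d g l.
Proof.
move=> hn hx0 hx hd hg hq hu.
have d0 : d != 0 by exact: lt0r_neq0.
have g0 : g != 0 by exact: lt0r_neq0.
have hx1 : 0 < x 1%N by apply: hx; nlia.
have x1 : x 1%N != 0 by exact: lt0r_neq0.
have hx2 : 0 < x 2%N by apply: hx; nlia.
have x2 : x 2%N != 0 by exact: lt0r_neq0.
have hx3 : 0 < x 3%N by apply: hx; nlia.
have x3 : x 3%N != 0 by exact: lt0r_neq0.
have hx4 : 0 < x 4%N by apply: hx; nlia.
have x4 : x 4%N != 0 by exact: lt0r_neq0.
apply/matrixP => i j; rewrite ord1 !mxE.
apply: prop_lemma; first exact: lt0r_neq0.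
case: i => [[|[|[|[|i]]]] hi] /=.
- transitivity (0 * q2B (n%:R) d g l); last by rewrite hq mulr0.
  rewrite /w2Bf /v2Bf /q2B /= ?hx0; field; by rewrite ?d0 ?g0 ?x1 ?x2 ?x3 ?x4 ?xi0 ?xk0 ?hl0.
- transitivity ((- (l * d^+2 * g * (x 2%N)) / ((x 1%N)) + (l * d^+2 * g^+2 * (x 2%N)) / ((x 1%N)) - (l^+2 * d^+2 * g^+2 * (x 2%N)) / ((x 1%N))) * q2B (n%:R) d g l); last by rewrite hq mulr0.
  rewrite /w2Bf /v2Bf /q2B /= ?hx0; field; by rewrite ?d0 ?g0 ?x1 ?x2 ?x3 ?x4 ?xi0 ?xk0 ?hl0.
- transitivity ((- 2%:R * l^+2 * d^+2 * g^+2 + l^+2 * d^+2 * g^+2 * (n%:R) - l^+3 * d^+2 * g^+2) * q2B (n%:R) d g l); last by rewrite hq mulr0.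
  rewrite /w2Bf /v2Bf /q2B /= ?hx0; field; by rewrite ?d0 ?g0 ?x1 ?x2 ?x3 ?x4 ?xi0 ?xk0 ?hl0.
- transitivity ((- (3%:R * l * d^+2 * g * (x 2%N)) / ((x 3%N)) + (l * d^+2 * g * (n%:R) * (x 2%N)) / ((x 3%N)) + (3%:R * l * d^+2 * g^+2 * (x 2%N)) / ((x 3%N)) - (l * d^+2 * g^+2 * (n%:R) * (x 2%N)) / ((x 3%N)) - (l^+2 * d^+2 * g * (x 2%N)) / ((x 3%N))) * q2B (n%:R) d g l); last by rewrite hq mulr0.
  rewrite /w2Bf /v2Bf /q2B /= ?hx0; field; by rewrite ?d0 ?g0 ?x1 ?x2 ?x3 ?x4 ?xi0 ?xk0 ?hl0.
- have xk0 : x i.+4 != 0 by apply: lt0r_neq0; apply: hx; nlia.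
  transitivity ((- (l * d^+2 * g * (x 2%N)) / ((x i.+4)) + (l * d^+2 * g^+2 * (x 2%N)) / ((x i.+4)) - (l^+2 * d^+2 * g^+2 * (x 2%N)) / ((x i.+4))) * q2B (n%:R) d g l); last by rewrite hq mulr0.
  rewrite /w2Bf /v2Bf /q2B /= ?hx0; field; by rewrite ?d0 ?g0 ?x1 ?x2 ?x3 ?x4 ?xi0 ?xk0 ?hl0.
Qed.

Lemma zpos2B (R : realType) n (x : nat -> R) d g l : (5 <= n)%N -> x 0%N = 1 ->
  (forall i, (1 <= i < n)%N -> 0 < x i) -> 0 < d -> 0 < g -> n%:R < l -> q2B (n%:R) d g l = 0 ->
  0 < z2Bf n x d g l 0.
Proof.
move=> hn hx0 hx hd hg hl hq.
have d0 : d != 0 by exact: lt0r_neq0.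
have g0 : g != 0 by exact: lt0r_neq0.
have hl0' : 0 < l by apply: lt_trans hl; rewrite ltr0n; nlia.
have hl0 : l != 0 by exact: lt0r_neq0.
have ha : 0 < l - n%:R by rewrite subr_gt0.
have hk : 0 <= n%:R - 5 :> R by rewrite subr_ge0 (ler_nat R 5 n).
have hk2 : 0 <= n%:R - 2 :> R by rewrite subr_ge0 (ler_nat R 2 n); nlia.
have hk4 : 0 <= n%:R - 4 :> R by rewrite subr_ge0 (ler_nat R 4 n); nlia.
have hx1 : 0 < x 1%N by apply: hx; nlia.
have x1 : x 1%N != 0 by exact: lt0r_neq0.
have hx2 : 0 < x 2%N by apply: hx; nlia.
have x2 : x 2%N != 0 by exact: lt0r_neq0.
have hx3 : 0 < x 3%N by apply: hx; nlia.
have x3 : x 3%N != 0 by exact: lt0r_neq0.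
have hx4 : 0 < x 4%N by apply: hx; nlia.
have x4 : x 4%N != 0 by exact: lt0r_neq0.
rewrite /z2Bf /=.
- apply: (@pos_eq R ((80%:R * d * (x 3%N) + 56%:R * d * (x 3%N) * (l - n%:R) + 13%:R * d * (x 3%N) * (l - n%:R)^+2 + d * (x 3%N) * (l - n%:R)^+3 + 20%:R * d * g * (x 3%N) + 9%:R * d * g * (x 3%N) * (l - n%:R) + d * g * (x 3%N) * (l - n%:R)^+2 + 20%:R * d^+2 * (x 3%N) + 9%:R * d^+2 * (x 3%N) * (l - n%:R) + d^+2 * (x 3%N) * (l - n%:R)^+2 + 5%:R * d^+2 * g * (x 3%N) + d^+2 * g * (x 3%N) * (l - n%:R)) + (56%:R * d * (x 3%N) * (n%:R - 5) + 13%:R * d * (x 3%N) * (n%:R - 5)^+2 + d * (x 3%N) * (n%:R - 5)^+3 + 26%:R * d * (x 3%N) * (l - n%:R) * (n%:R - 5) + 3%:R * d * (x 3%N) * (l - n%:R) * (n%:R - 5)^+2 + 3%:R * d * (x 3%N) * (l - n%:R)^+2 * (n%:R - 5) + 9%:R * d * g * (x 3%N) * (n%:R - 5) + d * g * (x 3%N) * (n%:R - 5)^+2 + 2%:R * d * g * (x 3%N) * (l - n%:R) * (n%:R - 5) + 9%:R * d^+2 * (x 3%N) * (n%:R - 5) + d^+2 * (x 3%N) * (n%:R - 5)^+2 + 2%:R * d^+2 * (x 3%N) * (l - n%:R) * (n%:R - 5) + d^+2 * g * (x 3%N) * (n%:R - 5)))); [first [ring | clear hq; field; by rewrite ?d0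 ?g0 ?x1 ?x2 ?x3 ?x4 ?xi0 ?xk0 ?hl0] | apply: posD; [sp | nn]].
Qed.

Lemma prop2Bz (R : realType) n (x : nat -> R) d g l : (5 <= n)%N -> x 0%N = 1 ->
  (forall i, (1 <= i < n)%N -> 0 < x i) -> 0 < d -> 0 < g -> q2B (n%:R) d g l = 0 ->
  0 < z2Bf n x d g l 0 ->
  w2B n x d g l = (w2Bf n x d g l 0 / z2Bf n x d g l 0) *: z2B n x d g l.
Proof.
move=> hn hx0 hx hd hg hq hu.
have d0 : d != 0 by exact: lt0r_neq0.
have g0 : g != 0 by exact: lt0r_neq0.
have hx1 : 0 < x 1%N by apply: hx; nlia.
have x1 : x 1%N != 0 by exact: lt0r_neq0.
have hx2 : 0 < x 2%N by apply: hx; nlia.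
have x2 : x 2%N != 0 by exact: lt0r_neq0.
have hx3 : 0 < x 3%N by apply: hx; nlia.
have x3 : x 3%N != 0 by exact: lt0r_neq0.
have hx4 : 0 < x 4%N by apply: hx; nlia.
have x4 : x 4%N != 0 by exact: lt0r_neq0.
apply/matrixP => i j; rewrite ord1 !mxE.
apply: prop_lemma; first exact: lt0r_neq0.
case: i => [[|[|[|[|i]]]] hi] /=.
- transitivity (0 * q2B (n%:R) d g l); last by rewrite hq mulr0.
  rewrite /w2Bf /z2Bf /q2B /= ?hx0; field; by rewrite ?d0 ?g0 ?x1 ?x2 ?x3 ?x4 ?xi0 ?xk0 ?hl0.
- transitivity (((l * d^+2 * g * (x 3%N)) / ((x 1%N)) - (l * d^+2 * g^+2 * (x 3%N)) / ((x 1%N)) - (l^+2 * d^+2 * g * (x 3%N)) / ((x 1%N))) * q2B (n%:R) d g l); last by rewrite hq mulr0.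
  rewrite /w2Bf /z2Bf /q2B /= ?hx0; field; by rewrite ?d0 ?g0 ?x1 ?x2 ?x3 ?x4 ?xi0 ?xk0 ?hl0.
- transitivity (((3%:R * l * d^+2 * g * (x 3%N)) / ((x 2%N)) - (l * d^+2 * g * (n%:R) * (x 3%N)) / ((x 2%N)) - (3%:R * l * d^+2 * g^+2 * (x 3%N)) / ((x 2%N)) + (l * d^+2 * g^+2 * (n%:R) * (x 3%N)) / ((x 2%N)) - (l^+2 * d^+2 * g^+2 * (x 3%N)) / ((x 2%N))) * q2B (n%:R) d g l); last by rewrite hq mulr0.
  rewrite /w2Bf /z2Bf /q2B /= ?hx0; field; by rewrite ?d0 ?g0 ?x1 ?x2 ?x3 ?x4 ?xi0 ?xk0 ?hl0.
- transitivity ((- 2%:R * l^+2 * d^+2 * g + l^+2 * d^+2 * g * (n%:R) - l^+3 * d^+2 * g) * q2B (n%:R) d g l); last by rewrite hq mulr0.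
  rewrite /w2Bf /z2Bf /q2B /= ?hx0; field; by rewrite ?d0 ?g0 ?x1 ?x2 ?x3 ?x4 ?xi0 ?xk0 ?hl0.
- have xk0 : x i.+4 != 0 by apply: lt0r_neq0; apply: hx; nlia.
  transitivity (((l * d^+2 * g * (x 3%N)) / ((x i.+4)) - (l * d^+2 * g^+2 * (x 3%N)) / ((x i.+4)) - (l^+2 * d^+2 * g * (x 3%N)) / ((x i.+4))) * q2B (n%:R) d g l); last by rewrite hq mulr0.
  rewrite /w2Bf /z2Bf /q2B /= ?hx0; field; by rewrite ?d0 ?g0 ?x1 ?x2 ?x3 ?x4 ?xi0 ?xk0 ?hl0.
Qed.

Lemma ypos2B (R : realType) n (x : nat -> R) d g l : (5 <= n)%N -> x 0%N = 1 ->
  (forall i, (1 <= i < n)%N -> 0 < x i) -> 0 < d -> 0 < g -> n%:R < l -> q2B (n%:R) d g l = 0 ->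
  0 < y2Bf n x d g l 0.
Proof.
move=> hn hx0 hx hd hg hl hq.
have d0 : d != 0 by exact: lt0r_neq0.
have g0 : g != 0 by exact: lt0r_neq0.
have hl0' : 0 < l by apply: lt_trans hl; rewrite ltr0n; nlia.
have hl0 : l != 0 by exact: lt0r_neq0.
have ha : 0 < l - n%:R by rewrite subr_gt0.
have hk : 0 <= n%:R - 5 :> R by rewrite subr_ge0 (ler_nat R 5 n).
have hk2 : 0 <= n%:R - 2 :> R by rewrite subr_ge0 (ler_nat R 2 n); nlia.
have hk4 : 0 <= n%:R - 4 :> R by rewrite subr_ge0 (ler_nat R 4 n); nlia.
have hx1 : 0 < x 1%N by apply: hx; nlia.
have x1 : x 1%N != 0 by exact: lt0r_neq0.
have hx2 : 0 < x 2%N by apply: hx; nlia.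
have x2 : x 2%N != 0 by exact: lt0r_neq0.
have hx3 : 0 < x 3%N by apply: hx; nlia.
have x3 : x 3%N != 0 by exact: lt0r_neq0.
have hx4 : 0 < x 4%N by apply: hx; nlia.
have x4 : x 4%N != 0 by exact: lt0r_neq0.
rewrite /y2Bf /=.
- apply: (@pos_eq R ((20%:R * d * (x 4%N) + 9%:R * d * (x 4%N) * (l - n%:R) + d * (x 4%N) * (l - n%:R)^+2 + 460%:R * d * g * (x 4%N) + 407%:R * d * g * (x 4%N) * (l - n%:R) + 133%:R * d * g * (x 4%N) * (l - n%:R)^+2 + 19%:R * d * g * (x 4%N) * (l - n%:R)^+3 + d * g * (x 4%N) * (l - n%:R)^+4 + 20%:R * d * g^+2 * (x 4%N) + 9%:R * d * g^+2 * (x 4%N) * (l - n%:R) + d * g^+2 * (x 4%N) * (l - n%:R)^+2 + 5%:R * d^+2 * (x 4%N) + d^+2 * (x 4%N) * (l - n%:R) + 115%:R * d^+2 * g * (x 4%N) + 73%:R * d^+2 * g * (x 4%N) * (l - n%:R) + 15%:R * d^+2 * g * (x 4%N) * (l - n%:R)^+2 + d^+2 * g * (x 4%N) * (l - n%:R)^+3 + 5%:R * d^+2 * g^+2 * (x 4%N) + d^+2 * g^+2 * (x 4%N) * (l - n%:R)) + (9%:R * d * (x 4%N) * (n%:R - 5) + d * (x 4%N) * (n%:R - 5)^+2 + 2%:R * d * (x 4%N) * (l - n%:R) * (n%:R - 5) + 407%:R * d * g * (x 4%N) * (n%:R - 5) + 133%:R * d * g * (x 4%N) * (n%:R - 5)^+2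 + 19%:R * d * g * (x 4%N) * (n%:R - 5)^+3 + d * g * (x 4%N) * (n%:R - 5)^+4 + 266%:R * d * g * (x 4%N) * (l - n%:R) * (n%:R - 5) + 57%:R * d * g * (x 4%N) * (l - n%:R) * (n%:R - 5)^+2 + 4%:R * d * g * (x 4%N) * (l - n%:R) * (n%:R - 5)^+3 + 57%:R * d * g * (x 4%N) * (l - n%:R)^+2 * (n%:R - 5) + 6%:R * d * g * (x 4%N) * (l - n%:R)^+2 * (n%:R - 5)^+2 + 4%:R * d * g * (x 4%N) * (l - n%:R)^+3 * (n%:R - 5) + 9%:R * d * g^+2 * (x 4%N) * (n%:R - 5) + d * g^+2 * (x 4%N) * (n%:R - 5)^+2 + 2%:R * d * g^+2 * (x 4%N) * (l - n%:R) * (n%:R - 5) + d^+2 * (x 4%N) * (n%:R - 5) + 73%:R * d^+2 * g * (x 4%N) * (n%:R - 5) + 15%:R * d^+2 * g * (x 4%N) * (n%:R - 5)^+2 + d^+2 * g * (x 4%N) * (n%:R - 5)^+3 + 30%:R * d^+2 * g * (x 4%N) * (l - n%:R) * (n%:R - 5) + 3%:R * d^+2 * g * (x 4%N) * (l - n%:R) * (n%:R - 5)^+2 + 3%:R * d^+2 * g * (x 4%N) * (l - n%:R)^+2 * (n%:R - 5) + d^+2 * g^+2 * (x 4%N) * (n%:R - 5)))); [first [ring | clear hq; field; by rewrite ?d0 ?g0 ?x1 ?x2 ?x3 ?x4 ?xi0 ?xk0 ?hl0] | apply: posD; [sp | nn]].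
Qed.

Lemma prop2By (R : realType) n (x : nat -> R) d g l : (5 <= n)%N -> x 0%N = 1 ->
  (forall i, (1 <= i < n)%N -> 0 < x i) -> 0 < d -> 0 < g -> q2B (n%:R) d g l = 0 ->
  0 < y2Bf n x d g l 0 ->
  w2B n x d g l = (w2Bf n x d g l 0 / y2Bf n x d g l 0) *: y2B n x d g l.
Proof.
move=> hn hx0 hx hd hg hq hu.
have d0 : d != 0 by exact: lt0r_neq0.
have g0 : g != 0 by exact: lt0r_neq0.
have hx1 : 0 < x 1%N by apply: hx; nlia.
have x1 : x 1%N != 0 by exact: lt0r_neq0.
have hx2 : 0 < x 2%N by apply: hx; nlia.
have x2 : x 2%N != 0 by exact: lt0r_neq0.
have hx3 : 0 < x 3%N by apply: hx; nlia.
have x3 : x 3%N != 0 by exact: lt0r_neq0.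
have hx4 : 0 < x 4%N by apply: hx; nlia.
have x4 : x 4%N != 0 by exact: lt0r_neq0.
apply/matrixP => i j; rewrite ord1 !mxE.
apply: prop_lemma; first exact: lt0r_neq0.
case: i => [[|[|[|[|i]]]] hi] /=.
- transitivity (0 * q2B (n%:R) d g l); last by rewrite hq mulr0.
  rewrite /w2Bf /y2Bf /q2B /= ?hx0; field; by rewrite ?d0 ?g0 ?x1 ?x2 ?x3 ?x4 ?xi0 ?xk0 ?hl0.
- transitivity ((- (l * d^+2 * g * (x 4%N)) / ((x 1%N)) + (2%:R * l * d^+2 * g^+2 * (x 4%N)) / ((x 1%N)) - (l * d^+2 * g^+3 * (x 4%N)) / ((x 1%N)) - (l^+3 * d^+2 * g^+2 * (x 4%N)) / ((x 1%N))) * q2B (n%:R) d g l); last by rewrite hq mulr0.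
  rewrite /w2Bf /y2Bf /q2B /= ?hx0; field; by rewrite ?d0 ?g0 ?x1 ?x2 ?x3 ?x4 ?xi0 ?xk0 ?hl0.
- transitivity (((l^+2 * d^+2 * g^+2 * (x 4%N)) / ((x 2%N)) - (l^+2 * d^+2 * g^+3 * (x 4%N)) / ((x 2%N)) - (l^+3 * d^+2 * g^+2 * (x 4%N)) / ((x 2%N))) * q2B (n%:R) d g l); last by rewrite hq mulr0.
  rewrite /w2Bf /y2Bf /q2B /= ?hx0; field; by rewrite ?d0 ?g0 ?x1 ?x2 ?x3 ?x4 ?xi0 ?xk0 ?hl0.
- transitivity ((- (l^+2 * d^+2 * g * (x 4%N)) / ((x 3%N)) + (l^+2 * d^+2 * g^+2 * (x 4%N)) / ((x 3%N)) - (l^+3 * d^+2 * g^+2 * (x 4%N)) / ((x 3%N))) * q2B (n%:R) d g l); last by rewrite hq mulr0.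
  rewrite /w2Bf /y2Bf /q2B /= ?hx0; field; by rewrite ?d0 ?g0 ?x1 ?x2 ?x3 ?x4 ?xi0 ?xk0 ?hl0.
- have xk0 : x i.+4 != 0 by apply: lt0r_neq0; apply: hx; nlia.
  transitivity ((- (l * d^+2 * g * (x 4%N)) / ((x i.+4)) + (2%:R * l * d^+2 * g^+2 * (x 4%N)) / ((x i.+4)) - (l * d^+2 * g^+3 * (x 4%N)) / ((x i.+4)) - (l^+3 * d^+2 * g^+2 * (x 4%N)) / ((x i.+4))) * q2B (n%:R) d g l); last by rewrite hq mulr0.
  rewrite /w2Bf /y2Bf /q2B /= ?hx0; field; by rewrite ?d0 ?g0 ?x1 ?x2 ?x3 ?x4 ?xi0 ?xk0 ?hl0.
Qed.


Lemma Apos (R : realType) (d g : R) : 0 < d -> 0 < g -> d != 1 ->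
  0 < (d - 1) ^+ 2 / d + (g - 1) ^+ 2 / g.
Proof.
move=> hd hg hd1; apply: posD; first by apply: divr_gt0 => //; exact: sqr_pos.
by apply: divr_ge0; [exact: sqr_ge0 | exact: ltW].
Qed.

Lemma Cnn (R : realType) (d g : R) : 0 < d -> 0 < g ->
  0 <= (d - 1) ^+ 2 * (g - 1) ^+ 2 / (d * g).
Proof.
move=> hd hg; apply: divr_ge0; first by apply: mulr_ge0; exact: sqr_ge0.
by apply: ltW; apply: mulr_gt0.
Qed.

Lemma pow_facts (R : realType) (b : R) : 1 < b ->
  [/\ 1 <= b, b <= b ^+ 2, b ^+ 2 <= b ^+ 3, b ^+ 3 <= b ^+ 4 & 0 < b].
Proof.
move=> hb; have hb1 : 1 <= b by exact: ltW.
split => //; last by apply: lt_trans hb.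
  - by rewrite -{1}(expr1 b) ler_eXn2l.
  - by rewrite ler_eXn2l.
  - by rewrite ler_eXn2l.
Qed.

Lemma root1 (R : realType) (n : nat) (d g : R) : (4 <= n)%N -> 0 < d -> 0 < g -> d != 1 ->
  exists2 mu, n%:R < mu & q1 n%:R d g mu = 0.
Proof.
move=> hn hd hg hd1.
have hN : 4 <= n%:R :> R by rewrite (ler_nat R 4 n).
set A := (d - 1) ^+ 2 / d + (g - 1) ^+ 2 / g.
have hA : 0 < A by exact: Apos.
set K := (n%:R - 3) * A + (g - d) ^+ 2 / (d * g).
have hK : 0 < K.
  apply: posD; first by apply: mulr_gt0 => //; rewrite subr_gt0; apply: lt_le_trans hN; rewrite ltr_nat.
  apply: divr_ge0; [exact: sqr_ge0 | by apply: ltW; apply: mulr_gt0].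
pose f : {poly R} := 'X^2 * ('X - (n%:R)%:P) - K%:P.
have fE : forall t, f.[t] = q1 n%:R d g t by move=> t; rewrite /f /q1 !hornerE.
set b := n%:R + 1 + K.
have : exists2 mu, (n%:R) < mu & root f mu.
  apply: (@root_above R f (n%:R) b).
  - by rewrite /b -addrA lerDl; apply: ltW; apply: addr_gt0 => //; exact: ltr01.
  - by rewrite fE /q1 subrr mulr0 sub0r -/A -/K oppr_lt0.
  - rewrite fE /q1 -/A -/K (_ : b - n%:R = 1 + K); last by rewrite /b; ring.
  have [hb1 hb2 _ _ _] := @pow_facts R b ltac:(rewrite /b; lra).
  rewrite (_ : b ^+ 2 * (1 + K) - K = (b ^+ 2 - 1) * (1 + K) + 1); last by ring.
  apply: addr_ge0; last exact: ler01.
  apply: mulr_ge0; first by rewrite subr_ge0; apply: le_trans hb2.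
  by apply: ltW; apply: addr_gt0 => //; exact: ltr01.
case=> mu h1 h2.
by exists mu => //; move: h2; rewrite /root fE => /eqP.
Qed.

Lemma root2A (R : realType) (d g : R) : 0 < d -> 0 < g -> d != 1 ->
  exists2 mu, 4 < mu & q2A d g mu = 0.
Proof.
move=> hd hg hd1.
set A := (d - 1) ^+ 2 / d + (g - 1) ^+ 2 / g.
have hA : 0 < A by exact: Apos.
set C := (d - 1) ^+ 2 * (g - 1) ^+ 2 / (d * g).
have hC : 0 <= C by exact: Cnn.
pose f : {poly R} := 'X^3 * ('X - 4%:P) - (2 * A)%:P * 'X - C%:P.
have fE : forall t, f.[t] = q2A d g t.
  by move=> t; rewrite /f !hornerE /q2A /A /C.
set b := 5 + 2 * A + C.
have : exists2 mu, 4 < mu & root f mu.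
  apply: (@root_above R f 4 b).
  - rewrite /b; lra.
  - rewrite fE /q2A subrr mulr0 sub0r -/A -/C; lra.
  - rewrite fE /q2A -/A -/C (_ : b - 4 = 1 + 2 * A + C); last by rewrite /b; ring.
  have [hb1 hb2 hb3 _ hb0] := @pow_facts R b ltac:(rewrite /b; lra).
  rewrite (_ : b ^+ 3 * (1 + 2 * A + C) - 2 * A * b - C =
     b ^+ 3 + 2 * A * (b ^+ 3 - b) + C * (b ^+ 3 - 1)); last by ring.
  have h3 : b <= b ^+ 3 by apply: le_trans hb3.
  have h31 : 1 <= b ^+ 3 by apply: le_trans h3.
  apply: addr_ge0; first apply: addr_ge0.
    + by apply: exprn_ge0; apply: ltW.
    + by apply: mulr_ge0; [apply: mulr_ge0 => //; apply: ltW | rewrite subr_ge0].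
    + by apply: mulr_ge0 => //; rewrite subr_ge0.
case=> mu h1 h2.
by exists mu => //; move: h2; rewrite /root fE => /eqP.
Qed.

Lemma root2B (R : realType) (n : nat) (d g : R) : (5 <= n)%N -> 0 < d -> 0 < g -> d != 1 ->
  exists2 mu, n%:R < mu & q2B n%:R d g mu = 0.
Proof.
move=> hn hd hg hd1.
have hN : 5 <= n%:R :> R by rewrite (ler_nat R 5 n).
set A := (d - 1) ^+ 2 / d + (g - 1) ^+ 2 / g.
have hA : 0 < A by exact: Apos.
set C := (d - 1) ^+ 2 * (g - 1) ^+ 2 / (d * g).
have hC : 0 <= C by exact: Cnn.
set K2 := (n%:R - 2) * A.
have hK2 : 0 < K2 by apply: mulr_gt0 => //; lra.
set K3 := (n%:R - 4) * C.
have hK3 : 0 <= K3 by apply: mulr_ge0 => //; lra.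
pose f : {poly R} := 'X^4 * ('X - (n%:R)%:P) - (K2%:P * 'X^2 + C%:P * 'X + K3%:P).
have fE : forall t, f.[t] = q2B n%:R d g t.
  move=> t; rewrite /f !hornerE /q2B /K2 /K3 /A /C.
  by congr (_ - (_ + _ + _)); rewrite expr2 mulrA.
set b := n%:R + 1 + K2 + C + K3.
have : exists2 mu, (n%:R) < mu & root f mu.
  apply: (@root_above R f (n%:R) b).
  - rewrite /b; lra.
  - rewrite fE /q2B subrr mulr0 sub0r -/A -/C -/K2 -/K3 oppr_lt0.
  apply: posD; last exact: hK3.
  apply: posD; last by apply: mulr_ge0 => //; lra.
  by apply: mulr_gt0 => //; apply: exprn_gt0; lra.
  - rewrite fE /q2B -/A -/C -/K2 -/K3 (_ : b - n%:R = 1 + K2 + C + K3); last by rewrite /b; ring.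
  have [hb1 hb2 hb3 hb4 hb0] := @pow_facts R b ltac:(rewrite /b; lra).
  rewrite (_ : b ^+ 4 * (1 + K2 + C + K3) - (K2 * b ^+ 2 + C * b + K3) =
     b ^+ 4 + K2 * (b ^+ 4 - b ^+ 2) + C * (b ^+ 4 - b) + K3 * (b ^+ 4 - 1)); last by ring.
  have h42 : b ^+ 2 <= b ^+ 4 by apply: le_trans hb4.
  have h41 : b <= b ^+ 4 by apply: le_trans h42.
  have h40 : 1 <= b ^+ 4 by apply: le_trans h41.
  apply: addr_ge0; first apply: addr_ge0; first apply: addr_ge0.
    + by apply: exprn_ge0; apply: ltW.
    + by apply: mulr_ge0; [apply: ltW | rewrite subr_ge0].
    + by apply: mulr_ge0 => //; rewrite subr_ge0.
    + by apply: mulr_ge0 => //; rewrite subr_ge0.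
case=> mu h1 h2.
by exists mu => //; move: h2; rewrite /root fE => /eqP.
Qed.

Lemma case1 (R : realType) (n : nat) (x : nat -> R) (g d : R) :
  x 0%N = 1 -> (forall i, (1 <= i < n)%N -> 0 < x i) -> 0 < g -> 0 < d -> g != 1 -> d != 1 ->
  (4 <= n)%N -> forall l : R, is_lambda_max (Pmat n x d g) l ->
     is_principal_right_eigvec (Pmat n x d g) (w1 n x d g l) /\
     exists c11 c12 c13 : R,
       [/\ w1 n x d g l = c11 *: u1 n x d g l,
           w1 n x d g l = c12 *: v1 n x d g l &
           w1 n x d g l = c13 *: z1 n x d g l].
Proof.
move=> hx0 hx hg hd hg1 hd1 hn l [hle hmax].
have [mu hmu hqmu] := root1 hn hd hg hd1.
have wmu := wpos1 hn hx0 hx hd hg hmu hqmu.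
have h0n : (0 < n)%N by apply: leq_trans hn.
have eigmu : eigenvalue (Pmat n x d g) mu.
  apply: (right_eig (eigE1 hn hx0 hx hd hg hqmu)).
  apply/eqP => /matrixP /(_ (Ordinal h0n) ord0) h.
  have E : w1 n x d g mu (Ordinal h0n) ord0 = w1f n x d g mu 0 by rewrite mxE.
  by move: (wmu 0%N h0n); rewrite -E h mxE ltxx.
have hml := hmax mu eigmu.
have hl : n%:R < l := lt_le_trans hmu hml.
have hl0 : l != 0.
  apply: lt0r_neq0; apply: le_lt_trans hl; exact: ler0n.
have [v hv hv0] := eig_right hle.
have hql := eigR1 hn hx0 hx hd hg hl0 hv hv0.
have wl := wpos1 hn hx0 hx hd hg hl hql.
split.
  exists l; split => //; first exact: eigE1 hn hx0 hx hd hg hql.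
  by move=> i; rewrite mxE; exact: (wl i (ltn_ord i)).
exists (w1f n x d g l 0 / u1f n x d g l 0), (w1f n x d g l 0 / v1f n x d g l 0),
  (w1f n x d g l 0 / z1f n x d g l 0); split.
- exact: prop1u hn hx0 hx hd hg hql (upos1 hn hx0 hx hd hg hl hql).
- exact: prop1v hn hx0 hx hd hg hql (vpos1 hn hx0 hx hd hg hl hql).
- exact: prop1z hn hx0 hx hd hg hql (zpos1 hn hx0 hx hd hg hl hql).
Qed.

Lemma case2A (R : realType) (x : nat -> R) (g d : R) :
  x 0%N = 1 -> (forall i, (1 <= i < 4)%N -> 0 < x i) -> 0 < g -> 0 < d -> g != 1 -> d != 1 ->
  forall l : R, is_lambda_max (QRmat 4 x d g) l ->
     is_principal_right_eigvec (QRmat 4 x d g) (w2A x d g l) /\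
     exists c21 c22 c23 : R,
       [/\ w2A x d g l = c21 *: u2A x d g l,
           w2A x d g l = c22 *: v2A x d g l &
           w2A x d g l = c23 *: z2A x d g l].
Proof.
move=> hx0 hx hg hd hg1 hd1 l [hle hmax].
have [mu hmu hqmu] := root2A hd hg hd1.
have wmu := wpos2A hx0 hx hd hg hmu hqmu.
have h0n : (0 < 4)%N by [].
have eigmu : eigenvalue (QRmat 4 x d g) mu.
  apply: (right_eig (eigE2A hx0 hx hd hg hqmu)).
  apply/eqP => /matrixP /(_ (Ordinal h0n) ord0) h.
  have E : w2A x d g mu (Ordinal h0n) ord0 = w2Af x d g mu 0 by rewrite mxE.
  by move: (wmu 0%N h0n); rewrite -E h mxE ltxx.
have hml := hmax mu eigmu.
have hl : 4 < l := lt_le_trans hmu hml.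
have hl0 : l != 0.
  apply: lt0r_neq0; apply: le_lt_trans hl; exact: ler0n.
have [v hv hv0] := eig_right hle.
have hql := eigR2A hx0 hx hd hg hl0 hv hv0.
have wl := wpos2A hx0 hx hd hg hl hql.
split.
  exists l; split => //; first exact: eigE2A hx0 hx hd hg hql.
  by move=> i; rewrite mxE; exact: (wl i (ltn_ord i)).
exists (w2Af x d g l 0 / u2Af x d g l 0), (w2Af x d g l 0 / v2Af x d g l 0),
  (w2Af x d g l 0 / z2Af x d g l 0); split.
- exact: prop2Au hx0 hx hd hg hql (upos2A hx0 hx hd hg hl hql).
- exact: prop2Av hx0 hx hd hg hql (vpos2A hx0 hx hd hg hl hql).
- exact: prop2Az hx0 hx hd hg hql (zpos2A hx0 hx hd hg hl hql).
Qed.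

Lemma case2B (R : realType) (n : nat) (x : nat -> R) (g d : R) :
  x 0%N = 1 -> (forall i, (1 <= i < n)%N -> 0 < x i) -> 0 < g -> 0 < d -> g != 1 -> d != 1 ->
  (5 <= n)%N -> forall l : R, is_lambda_max (QRmat n x d g) l ->
     is_principal_right_eigvec (QRmat n x d g) (w2B n x d g l) /\
     exists c31 c32 c33 c34 : R,
       [/\ w2B n x d g l = c31 *: u2B n x d g l,
           w2B n x d g l = c32 *: v2B n x d g l,
           w2B n x d g l = c33 *: z2B n x d g l &
           w2B n x d g l = c34 *: y2B n x d g l].
Proof.
move=> hx0 hx hg hd hg1 hd1 hn l [hle hmax].
have [mu hmu hqmu] := root2B hn hd hg hd1.
have wmu := wpos2B hn hx0 hx hd hg hmu hqmu.
have h0n : (0 < n)%N by apply: leq_trans hn.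
have eigmu : eigenvalue (QRmat n x d g) mu.
  apply: (right_eig (eigE2B hn hx0 hx hd hg hqmu)).
  apply/eqP => /matrixP /(_ (Ordinal h0n) ord0) h.
  have E : w2B n x d g mu (Ordinal h0n) ord0 = w2Bf n x d g mu 0 by rewrite mxE.
  by move: (wmu 0%N h0n); rewrite -E h mxE ltxx.
have hml := hmax mu eigmu.
have hl : n%:R < l := lt_le_trans hmu hml.
have hl0 : l != 0.
  apply: lt0r_neq0; apply: le_lt_trans hl; exact: ler0n.
have [v hv hv0] := eig_right hle.
have hql := eigR2B hn hx0 hx hd hg hl0 hv hv0.
have wl := wpos2B hn hx0 hx hd hg hl hql.
split.
  exists l; split => //; first exact: eigE2B hn hx0 hx hd hg hql.
  by move=> i; rewrite mxE; exact: (wl i (ltn_ord i)).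
exists (w2Bf n x d g l 2 / u2Bf n x d g l 2), (w2Bf n x d g l 0 / v2Bf n x d g l 0),
  (w2Bf n x d g l 0 / z2Bf n x d g l 0), (w2Bf n x d g l 0 / y2Bf n x d g l 0); split.
- exact: prop2Bu hn hx0 hx hd hg hql (upos2B hn hx0 hx hd hg hl hql).
- exact: prop2Bv hn hx0 hx hd hg hql (vpos2B hn hx0 hx hd hg hl hql).
- exact: prop2Bz hn hx0 hx hd hg hql (zpos2B hn hx0 hx hd hg hl hql).
- exact: prop2By hn hx0 hx hd hg hql (ypos2B hn hx0 hx hd hg hl hql).
Qed.

Theorem theorem5 (R : realType) (n : nat) (x : nat -> R) (gamma delta : R)
  (hx0 : x 0%N = 1) (hx : forall i : nat, (1 <= i < n)%N -> 0 < x i)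
  (hg : 0 < gamma) (hd : 0 < delta) (hg1 : gamma != 1) (hd1 : delta != 1) :
  (* Case 1 *)
  ((4 <= n)%N -> forall l : R, is_lambda_max (Pmat n x delta gamma) l ->
     is_principal_right_eigvec (Pmat n x delta gamma) (w1 n x delta gamma l) /\
     exists c11 c12 c13 : R,
       [/\ w1 n x delta gamma l = c11 *: u1 n x delta gamma l,
           w1 n x delta gamma l = c12 *: v1 n x delta gamma l &
           w1 n x delta gamma l = c13 *: z1 n x delta gamma l]) /\
  (* Case 2A *)
  (n = 4%N -> forall l : R, is_lambda_max (QRmat 4 x delta gamma) l ->
     is_principal_right_eigvec (QRmat 4 x delta gamma) (w2A x delta gamma l) /\
     exists c21 c22 c23 : R,
       [/\ w2A x delta gamma l = c21 *: u2A x delta gamma l,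
           w2A x delta gamma l = c22 *: v2A x delta gamma l &
           w2A x delta gamma l = c23 *: z2A x delta gamma l]) /\
  (* Case 2B *)
  ((5 <= n)%N -> forall l : R, is_lambda_max (QRmat n x delta gamma) l ->
     is_principal_right_eigvec (QRmat n x delta gamma) (w2B n x delta gamma l) /\
     exists c31 c32 c33 c34 : R,
       [/\ w2B n x delta gamma l = c31 *: u2B n x delta gamma l,
           w2B n x delta gamma l = c32 *: v2B n x delta gamma l,
           w2B n x delta gamma l = c33 *: z2B n x delta gamma l &
           w2B n x delta gamma l = c34 *: y2B n x delta gamma l]).
Proof.
split; first exact: case1 hx0 hx hg hd hg1 hd1.
split; last exact: case2B hx0 hx hg hd hg1 hd1.
move=> hn4; move: hx; rewrite hn4 => hx.
exact: case2A hx0 hx hg hd hg1 hd1.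
Qed.
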